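(* For $r\in(0,\infty)$ let $F_r$ be the distribution function of the Student $t$ density $$f_r(x)=\frac{\Gamma((r+1)/2)}{\sqrt{\pi r}\,\Gamma(r/2)}\Big(1+\frac{x^2}{r}\Big)^{-(r+1)/2},\quad x\in\mathbb{R}.$$ Then $F_r^{-1/r}$ and $(1-F_r)^{-1/r}$ are convex on $\mathbb{R}$ (i.e. $F_r$ is bi-$s^*$-concave with $s=-1/(1+r)$, $s^*=-1/r$), and $$\gamma(F_r)=\sup_{x\in\mathbb{R}}F_r(x)(1-F_r(x))\frac{|f_r'(x)|}{f_r(x)^2}=1+\frac1r .$$ In particular, $\gamma$ of the Cauchy distribution ($r=1$) equals $2$.
   Context: Bi-$s^*$-concavity for $s\in(-1,0)$, $s^*=s/(1+s)$: both $x\mapsto F(x)^{s^*}$ and $x\mapsto(1-F(x))^{s^*}$ are convex on $\mathbb{R}$. *)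

(* Defs.v *)
From Stdlib Require Import Reals.
Open Scope R_scope.

Definition RInt_eq (f : R -> R) (a b v : R) : Prop :=
  exists pr : Riemann_integrable f a b, RiemannInt pr = v.

Definition improper_lower (f : R -> R) (x l : R) : Prop :=
  forall eps, 0 < eps -> exists M, forall a, a < M ->
    exists w, RInt_eq f a x w /\ Rabs (w - l) < eps.

Definition improper_0_inf (f : R -> R) (l : R) : Prop :=
  forall eps, 0 < eps -> exists delta, 0 < delta /\ exists M, forall u v,
    0 < u -> u < delta -> M < v ->
    exists w, RInt_eq f u v w /\ Rabs (w - l) < eps.

Definition is_Gamma (a g : R) : Prop :=
  improper_0_inf (fun t => Rpower t (a - 1) * exp (- t)) g.

(* Student t density with r degrees of freedom, given c = Gamma((r+1)/2) and
   d = Gamma(r/2). *)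
Definition student_density (r c d : R) (x : R) : R :=
  c / (sqrt (PI * r) * d) * Rpower (1 + x ^ 2 / r) (- ((r + 1) / 2)).

Definition is_cdf_of (f F : R -> R) : Prop :=
  forall x, improper_lower f x (F x).

Definition convex_on_R (h : R -> R) : Prop :=
  forall x y t, 0 <= t -> t <= 1 ->
    h (t * x + (1 - t) * y) <= t * h x + (1 - t) * h y.

Definition bi_s_concave (s : R) (F : R -> R) : Prop :=
  let sstar := s / (1 + s) in
  convex_on_R (fun x => Rpower (F x) sstar) /\
  convex_on_R (fun x => Rpower (1 - F x) sstar).

Definition gamma_set (F f df : R -> R) (y : R) : Prop :=
  exists x, y = F x * (1 - F x) * Rabs (df x) / (f x) ^ 2.

(* Main.v *)
Require Import Defs.
From Stdlib Require Import Reals Lra Lia Classical ZArith.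
From Coquelicot Require Import Coquelicot.
Open Scope R_scope.

Lemma RInt_eq_RInt f a b w : RInt_eq f a b w -> RInt f a b = w.
Proof. intros [pr H]. rewrite RInt_Reals with (pr := pr). exact H. Qed.

Lemma RInt_eq_of f a b : a <= b ->
  (forall x, a <= x <= b -> continuity_pt f x) -> RInt_eq f a b (RInt f a b).
Proof.
  intros Hab Hc. exists (continuity_implies_RiemannInt Hab Hc).
  symmetry; apply RInt_Reals.
Qed.

Lemma nat_large x : exists N : nat, forall n, (N <= n)%nat -> x < INR n.
Proof.
  destruct (INR_unbounded x) as [N HN]. exists N. intros n Hn.
  apply le_INR in Hn. lra.
Qed.

Lemma limit_zero X a C N0 :
  (forall n, (N0 <= n)%nat -> Rabs X * (a + INR n) <= C) -> X = 0.
Proof.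
  intros H. destruct (Req_dec X 0) as [|HX]; auto. exfalso.
  assert (HX' : 0 < Rabs X) by (apply Rabs_pos_lt; auto).
  destruct (nat_large (C / Rabs X - a)) as [N HN].
  set (n := Nat.max N N0).
  assert (h1 := H n (Nat.le_max_r _ _)).
  assert (h2 := HN n (Nat.le_max_l _ _)).
  assert (h3 : C / Rabs X < a + INR n) by lra.
  apply (Rmult_lt_compat_l (Rabs X)) in h3; auto.
  replace (Rabs X * (C / Rabs X)) with C in h3 by (field; lra). lra.
Qed.

Lemma cont_of_derive f x l : is_derive f x l -> continuity_pt f x.
Proof. intros H. apply is_derive_Reals in H. apply derivable_continuous_pt. exists l. exact H. Qed.

Lemma convex_of_deriv h h' :
  (forall x, is_derive h x (h' x)) ->
  (forall x y, x <= y -> h' x <= h' y) -> convex_on_R h.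
Proof.
  intros Hd Hm.
  assert (Hc : forall x, continuity_pt h x).
  { intros x. eapply cont_of_derive; apply Hd. }
  assert (key : forall x y t, x <= y -> 0 <= t -> t <= 1 ->
            h (t * x + (1 - t) * y) <= t * h x + (1 - t) * h y).
  { intros x y t Hxy H0 H1. set (z := t * x + (1 - t) * y).
    destruct (MVT_gen h x z h') as [c1 [Hc1 E1]].
    { intros; apply Hd. } { intros; apply Hc. }
    destruct (MVT_gen h z y h') as [c2 [Hc2 E2]].
    { intros; apply Hd. } { intros; apply Hc. }
    assert (Hzx : x <= z <= y) by (unfold z; nra).
    rewrite Rmin_left in Hc1 by lra. rewrite Rmax_right in Hc1 by lra.
    rewrite Rmin_left in Hc2 by lra. rewrite Rmax_right in Hc2 by lra.
    assert (Hm12 : h' c1 <= h' c2) by (apply Hm; lra).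
    assert (ez : z - x = (1 - t) * (y - x)) by (unfold z; ring).
    assert (ez2 : y - z = t * (y - x)) by (unfold z; ring).
    rewrite ez in E1. rewrite ez2 in E2.
    assert (0 <= t * (1 - t) * (y - x) * (h' c2 - h' c1)).
    { apply Rmult_le_pos; [|lra]. apply Rmult_le_pos; [|lra]. nra. }
    nra. }
  intros x y t H0 H1. destruct (Rle_lt_dec x y) as [Hxy|Hxy].
  - apply key; auto.
  - replace (t * x + (1 - t) * y) with ((1 - t) * y + (1 - (1 - t)) * x) by ring.
    replace (t * h x + (1 - t) * h y) with ((1 - t) * h y + (1 - (1 - t)) * h x) by ring.
    apply key; lra.
Qed.

Lemma nondecr_of_deriv g g' :
  (forall x, is_derive g x (g' x)) -> (forall x, 0 <= g' x) ->
  forall x y, x <= y -> g x <= g y.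
Proof.
  intros Hd Hp x y Hxy.
  destruct (MVT_gen g x y g') as [c [_ E]].
  { intros; apply Hd. }
  { intros z _. eapply cont_of_derive; apply Hd. }
  specialize (Hp c). nra.
Qed.

Lemma exRInt_cont f a b : a <= b -> (forall x, a <= x <= b -> continuity_pt f x) -> ex_RInt f a b.
Proof.
  intros Hab H. apply ex_RInt_Reals_1. apply continuity_implies_RiemannInt; auto.
Qed.

Lemma Chasles f a b c : ex_RInt f a b -> ex_RInt f b c ->
  RInt f a c = RInt f a b + RInt f b c.
Proof. intros H1 H2. rewrite <- (RInt_Chasles f a b c H1 H2). reflexivity. Qed.

Lemma RInt_lin3 f g h al be u v : ex_RInt f u v -> ex_RInt g u v -> ex_RInt h u v ->
  RInt (fun x => f x + al * g x + be * h x) u v = RInt f u v + al * RInt g u v + be * RInt h u v.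
Proof.
  intros Hf Hg Hh. apply is_RInt_unique.
  assert (H1 := RInt_correct f u v Hf).
  assert (H2 := is_RInt_scal _ _ _ al _ (RInt_correct g u v Hg)).
  assert (H3 := is_RInt_scal _ _ _ be _ (RInt_correct h u v Hh)).
  assert (H := is_RInt_plus _ _ _ _ _ _ (is_RInt_plus _ _ _ _ _ _ H1 H2) H3).
  exact H.
Qed.

Lemma quad_disc A B C : 0 <= C -> (forall l, 0 <= A - 2 * l * B + l ^ 2 * C) -> B ^ 2 <= A * C.
Proof.
  intros HC H. destruct (Rle_lt_or_eq_dec 0 C HC) as [HC'|HC'].
  - specialize (H (B / C)).
    replace (A - 2 * (B / C) * B + (B / C) ^ 2 * C) with ((A * C - B ^ 2) / C) in H by (field; lra).
    assert (0 <= A * C - B ^ 2).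
    { apply Rmult_le_reg_r with (/ C). apply Rinv_0_lt_compat; auto. rewrite Rmult_0_l. exact H. }
    lra.
  - subst C. destruct (Req_dec B 0) as [HB|HB].
    + subst B. lra.
    + specialize (H ((A + 1) / (2 * B))).
      replace (A - 2 * ((A + 1) / (2 * B)) * B + ((A + 1) / (2 * B)) ^ 2 * 0) with (-1) in H by (field; auto).
      lra.
Qed.

Lemma CS_RInt p q u v : u <= v ->
  (forall x, u <= x <= v -> continuity_pt p x) ->
  (forall x, u <= x <= v -> continuity_pt q x) ->
  (RInt (fun x => p x * q x) u v) ^ 2 <=
    RInt (fun x => p x * p x) u v * RInt (fun x => q x * q x) u v.
Proof.
  intros Huv Hp Hq.
  assert (Ep : ex_RInt (fun x => p x * p x) u v).
  { apply exRInt_cont; auto. intros; apply continuity_pt_mult; auto. }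
  assert (Eqq : ex_RInt (fun x => q x * q x) u v).
  { apply exRInt_cont; auto. intros; apply continuity_pt_mult; auto. }
  assert (Epq : ex_RInt (fun x => p x * q x) u v).
  { apply exRInt_cont; auto. intros; apply continuity_pt_mult; auto. }
  apply quad_disc.
  - apply RInt_ge_0; auto. intros; nra.
  - intros l.
    replace (RInt (fun x => p x * p x) u v - 2 * l * RInt (fun x => p x * q x) u v +
        l ^ 2 * RInt (fun x => q x * q x) u v) with (RInt (fun x => (p x - l * q x) * (p x - l * q x)) u v).
    + apply RInt_ge_0; auto.
      * apply exRInt_cont; auto. intros; apply continuity_pt_mult; apply continuity_pt_minus; auto;
        apply continuity_pt_mult; auto; apply continuity_pt_const; intros ? ?; auto.
      * intros x _. apply Rle_0_sqr.
    +
      transitivity (RInt (fun x => p x * p x + (-2 * l) * (p x * q x) + l ^ 2 * (q x * q x)) u v).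
      { apply (RInt_ext (V:=R_CompleteNormedModule)). intros; apply Rminus_diag_uniq; ring. }
      rewrite RInt_lin3; auto. apply Rminus_diag_uniq; ring.
Qed.

Lemma exp_le_mono x y : x <= y -> exp x <= exp y.
Proof. intros [H|H]. apply Rlt_le, exp_increasing; auto. subst; lra. Qed.

Lemma RInt_FTC f df a b : a <= b -> (forall x, a <= x <= b -> is_derive f x (df x)) ->
  (forall x, a <= x <= b -> continuity_pt df x) -> RInt df a b = f b - f a.
Proof.
  intros Hab Hd Hc.
  assert (H := is_RInt_derive (V := R_CompleteNormedModule) f df a b).
  rewrite Rmin_left, Rmax_right in H by lra.
  apply (is_RInt_unique (V := R_CompleteNormedModule)). apply H; auto.
  intros. apply continuity_pt_filterlim. auto.
Qed.

Lemma exRInt_FTC f df a b : a <= b -> (forall x, a <= x <= b -> is_derive f x (df x)) ->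
  (forall x, a <= x <= b -> continuity_pt df x) -> ex_RInt df a b.
Proof. intros. apply exRInt_cont; auto. Qed.

Lemma cont_of_ex_derive f x : ex_derive f x -> continuity_pt f x.
Proof. intros [l Hl]. eapply cont_of_derive; eauto. Qed.

Lemma RInt_lin2 f g al be u v : ex_RInt f u v -> ex_RInt g u v ->
  RInt (fun x => al * f x + be * g x) u v = al * RInt f u v + be * RInt g u v.
Proof.
  intros Hf Hg. apply is_RInt_unique.
  assert (H2 := is_RInt_scal _ _ _ al _ (RInt_correct f u v Hf)).
  assert (H3 := is_RInt_scal _ _ _ be _ (RInt_correct g u v Hg)).
  exact (is_RInt_plus _ _ _ _ _ _ H2 H3).
Qed.

Lemma Rbar_mult_neg_p e : 0 < e -> Rbar_mult (- e) p_infty = m_infty.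
Proof.
  intros He. unfold Rbar_mult, Rbar_mult'. destruct (Rle_dec 0 (-e)) as [H|H]; [exfalso; lra|]. reflexivity.
Qed.

Lemma is_lim_Rpower_neg e : 0 < e -> is_lim (fun y => Rpower y (- e)) p_infty 0.
Proof.
  intros He. unfold Rpower.
  apply (is_lim_comp exp (fun y => - e * ln y) p_infty 0 m_infty).
  - apply is_lim_exp_m.
  - rewrite <- (Rbar_mult_neg_p e He). apply is_lim_scal_l. apply is_lim_ln_p.
  - exists 0. intros; discriminate.
Qed.

Lemma is_lim_seq_p_infty_shift a : is_lim_seq (fun n => INR n + a) p_infty.
Proof.
  apply (is_lim_seq_plus _ _ p_infty a p_infty). apply is_lim_seq_INR.
  apply is_lim_seq_const. reflexivity.
Qed.

Definition gam (a t : R) := Rpower t (a - 1) * exp (- t).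
Definition un (n : nat) := / (INR n + 1).
Definition vn (n : nat) := INR n + 1.
Definition Gseq (a l : R) := is_lim_seq (fun n => RInt (gam a) (un n) (vn n)) l.

Lemma vn_ge1 n : 1 <= vn n.
Proof. unfold vn. pose proof (pos_INR n). lra. Qed.
Lemma un_pos n : 0 < un n.
Proof. unfold un. apply Rinv_0_lt_compat. pose proof (pos_INR n). lra. Qed.
Lemma un_le1 n : un n <= 1.
Proof. unfold un. pose proof (pos_INR n). rewrite <- Rinv_1. apply Rinv_le_contravar; lra. Qed.

Lemma gam_derive a t : 0 < t -> ex_derive (gam a) t.
Proof. intros Ht. unfold gam, Rpower. auto_derive. exact Ht. Qed.

Lemma gam_cont a t : 0 < t -> continuity_pt (gam a) t.
Proof. intros Ht. destruct (gam_derive a t Ht) as [l Hl]. eapply cont_of_derive; eauto. Qed.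

Lemma gam_exRInt a u v : 0 < u -> u <= v -> ex_RInt (gam a) u v.
Proof.
  intros Hu Huv. apply exRInt_cont; auto. intros z Hz. apply gam_cont. lra.
Qed.

Lemma gam_pos a t : 0 < t -> 0 < gam a t.
Proof. intros. unfold gam, Rpower. apply Rmult_lt_0_compat; apply exp_pos. Qed.

Lemma Gamma_to_seq a g : is_Gamma a g -> Gseq a g.
Proof.
  intros H. unfold Gseq. apply is_lim_seq_spec. intros eps.
  destruct (H eps (cond_pos eps)) as [d [Hd [M HM]]].
  destruct (nat_large (Rmax M (/ d))) as [N HN]. exists N. intros n Hn.
  specialize (HN n Hn).
  assert (h1 : M < vn n). { unfold vn. pose proof (Rmax_l M (/d)). lra. }
  assert (h2 : un n < d).
  { unfold un. pose proof (Rmax_r M (/d)).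
    rewrite <- (Rinv_inv d).
    apply Rinv_lt_contravar. apply Rmult_lt_0_compat. apply Rinv_0_lt_compat; lra.
    pose proof (pos_INR n); lra. lra. }
  destruct (HM (un n) (vn n) (un_pos n) h2 h1) as [w [Hw Hwe]].
  unfold gam. rewrite (RInt_eq_RInt _ _ _ _ Hw). exact Hwe.
Qed.

Lemma Gseq_unique a l1 l2 : Gseq a l1 -> Gseq a l2 -> l1 = l2.
Proof.
  intros H1 H2. apply is_lim_seq_unique in H1. apply is_lim_seq_unique in H2.
  assert (E : Finite l1 = Finite l2) by (rewrite <- H1, <- H2; reflexivity).
  injection E; intros; subst; reflexivity.
Qed.

Definition Bd a t := Rpower t a * exp (- t).

Lemma Bd_u a : 0 < a -> is_lim_seq (fun n => Bd a (un n)) 0.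
Proof.
  intros Ha.
  apply is_lim_seq_le_le with (u := fun _ => 0)
     (w := fun n => Rpower (INR n + 1) (- a)).
  - intros n. unfold Bd. split.
    + unfold Rpower. apply Rlt_le, Rmult_lt_0_compat; apply exp_pos.
    + assert (E : Rpower (un n) a = Rpower (INR n + 1) (- a)).
      { unfold un, Rpower. rewrite ln_Rinv. f_equal. ring.
        pose proof (pos_INR n). lra. }
      rewrite E. assert (exp (- un n) <= 1).
      { rewrite <- exp_0. apply Rlt_le, exp_increasing. pose proof (un_pos n). lra. }
      assert (0 < Rpower (INR n + 1) (- a)) by (unfold Rpower; apply exp_pos).
      nra.
  - apply is_lim_seq_const.
  - apply (is_lim_comp_seq (fun y => Rpower y (- a)) (fun n => INR n + 1) p_infty 0).
    apply is_lim_Rpower_neg; auto. exists 0%nat; intros; discriminate.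
    apply is_lim_seq_p_infty_shift.
Qed.

Lemma lin_minus_ln a : is_lim (fun v => a * ln v - v) p_infty m_infty.
Proof.
  apply is_lim_spec. intros M.
  assert (H := is_lim_div_ln_p). apply is_lim_spec in H.
  assert (He : 0 < / (2 * (Rabs a + 1))).
  { apply Rinv_0_lt_compat. pose proof (Rabs_pos a). lra. }
  destruct (H (mkposreal _ He)) as [X HX]. simpl in HX.
  exists (Rmax (Rmax X 1) (- 2 * M)). intros v Hv.
  pose proof (Rmax_l (Rmax X 1) (-2*M)). pose proof (Rmax_r (Rmax X 1) (-2*M)).
  pose proof (Rmax_l X 1). pose proof (Rmax_r X 1).
  specialize (HX v ltac:(lra)). rewrite Rminus_0_r in HX.
  assert (Hv0 : 0 < v) by lra.
  assert (h : Rabs (ln v) < v * / (2 * (Rabs a + 1))).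
  { replace (ln v) with (v * (ln v / v)) by (field; lra).
    rewrite Rabs_mult, Rabs_pos_eq by lra. apply Rmult_lt_compat_l; auto. }
  assert (h2 : a * ln v <= Rabs a * Rabs (ln v)).
  { rewrite <- Rabs_mult. apply Rle_abs. }
  assert (h3 : Rabs a * Rabs (ln v) <= Rabs a * (v * / (2 * (Rabs a + 1)))).
  { apply Rmult_le_compat_l. apply Rabs_pos. lra. }
  assert (h4 : Rabs a * (v * / (2 * (Rabs a + 1))) <= v / 2).
  { pose proof (Rabs_pos a).
    replace (Rabs a * (v * / (2 * (Rabs a + 1)))) with (v / 2 * (Rabs a / (Rabs a + 1))) by (field; lra).
    assert (Rabs a / (Rabs a + 1) <= 1).
    { apply Rmult_le_reg_r with (Rabs a + 1). lra. unfold Rdiv. rewrite Rmult_assoc, Rinv_l by lra. lra. }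
    nra. }
  lra.
Qed.

Lemma Bd_v a : is_lim_seq (fun n => Bd a (vn n)) 0.
Proof.
  apply is_lim_seq_ext with (u := fun n => exp (a * ln (vn n) - vn n)).
  { intros n. unfold Bd, Rpower. rewrite <- exp_plus. reflexivity. }
  apply (is_lim_comp_seq (fun v => exp (a * ln v - v)) vn p_infty 0).
  - apply (is_lim_comp exp (fun v => a * ln v - v) p_infty 0 m_infty).
    apply is_lim_exp_m. apply lin_minus_ln. exists 0; intros; discriminate.
  - exists 0%nat; intros; discriminate.
  - unfold vn. apply is_lim_seq_p_infty_shift.
Qed.

Lemma gam_succ_RInt a u v : 0 < u -> u <= v ->
  RInt (gam (a + 1)) u v = (Bd a u - Bd a v) + a * RInt (gam a) u v.
Proof.
  intros Hu Huv.
  assert (Hd : forall t, 0 < t -> is_derive (fun t => - Bd a t) t (gam (a + 1) t - a * gam a t)).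
  { intros t Ht. unfold Bd, gam, Rpower. auto_derive. lra.
    replace (a + 1 - 1) with a by ring.
    replace (exp ((a - 1) * ln t)) with (exp (a * ln t) * exp (- ln t)).
    2:{ rewrite <- exp_plus. f_equal. ring. }
    rewrite (exp_Ropp (ln t)), exp_ln by lra. field. lra. }
  assert (HI : is_RInt (fun t => gam (a + 1) t - a * gam a t) u v (- Bd a v - - Bd a u)).
  { apply (is_RInt_derive (fun t => - Bd a t)).
    - intros x Hx. rewrite Rmin_left in Hx by lra. apply Hd. lra.
    - intros x Hx. rewrite Rmin_left in Hx by lra. rewrite Rmax_right in Hx by lra.
      apply continuity_pt_filterlim. apply continuity_pt_minus.
      apply gam_cont; lra. apply continuity_pt_mult. apply continuity_pt_const; intros ? ?; auto.
      apply gam_cont; lra. }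
  assert (HI2 := RInt_correct (gam a) u v (gam_exRInt a u v Hu Huv)).
  apply (is_RInt_scal _ _ _ a) in HI2.
  assert (HI3 := is_RInt_plus _ _ _ _ _ _ HI HI2).
  apply is_RInt_unique.
  replace (Bd a u - Bd a v + a * RInt (gam a) u v) with (plus (- Bd a v - - Bd a u) (scal a (RInt (gam a) u v))).
  2: { unfold plus, scal; simpl; unfold mult; simpl; ring. }
  eapply is_RInt_ext; [|exact HI3]. intros x _. unfold plus, scal; simpl; unfold mult; simpl; ring.
Qed.

Lemma un_le_vn n : un n <= vn n.
Proof. pose proof (un_le1 n); pose proof (vn_ge1 n); lra. Qed.

Lemma Gseq_succ a g : 0 < a -> Gseq a g -> Gseq (a + 1) (a * g).
Proof.
  intros Ha H. unfold Gseq.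
  apply is_lim_seq_ext with
    (u := fun n => (Bd a (un n) - Bd a (vn n)) + a * RInt (gam a) (un n) (vn n)).
  { intros n. rewrite gam_succ_RInt; auto. apply un_pos. apply un_le_vn. }
  replace (a * g) with ((0 - 0) + a * g) by ring.
  apply is_lim_seq_plus'. apply is_lim_seq_minus'. apply Bd_u; auto. apply Bd_v.
  apply (is_lim_seq_scal_l _ a g). exact H.
Qed.

Lemma Gseq_logconv x y gx gy gm : Gseq x gx -> Gseq y gy -> Gseq ((x + y) / 2) gm ->
  gm ^ 2 <= gx * gy.
Proof.
  intros Hx Hy Hm.
  set (p := fun t => Rpower t ((x - 1) / 2) * exp (- t / 2)).
  set (q := fun t => Rpower t ((y - 1) / 2) * exp (- t / 2)).
  assert (Ep : forall t, p t * p t = gam x t).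
  { intros t. unfold p, gam. 
    replace (Rpower t ((x - 1) / 2) * exp (- t / 2) * (Rpower t ((x - 1) / 2) * exp (- t / 2)))
      with ((Rpower t ((x - 1) / 2) * Rpower t ((x - 1) / 2)) * (exp (- t / 2) * exp (- t / 2))) by ring.
    rewrite <- Rpower_plus, <- exp_plus. f_equal; f_equal; field. }
  assert (Eq2 : forall t, q t * q t = gam y t).
  { intros t. unfold q, gam. 
    replace (Rpower t ((y - 1) / 2) * exp (- t / 2) * (Rpower t ((y - 1) / 2) * exp (- t / 2)))
      with ((Rpower t ((y - 1) / 2) * Rpower t ((y - 1) / 2)) * (exp (- t / 2) * exp (- t / 2))) by ring.
    rewrite <- Rpower_plus, <- exp_plus. f_equal; f_equal; field. }
  assert (Epq : forall t, p t * q t = gam ((x + y) / 2) t).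
  { intros t. unfold p, q, gam. 
    replace (Rpower t ((x - 1) / 2) * exp (- t / 2) * (Rpower t ((y - 1) / 2) * exp (- t / 2)))
      with ((Rpower t ((x - 1) / 2) * Rpower t ((y - 1) / 2)) * (exp (- t / 2) * exp (- t / 2))) by ring.
    rewrite <- Rpower_plus, <- exp_plus. f_equal; f_equal; field. }
  assert (Hc : forall e t, 0 < t -> continuity_pt (fun t => Rpower t e * exp (- t / 2)) t).
  { intros e t Ht. assert (ex_derive (fun t => Rpower t e * exp (- t / 2)) t).
    { unfold Rpower. auto_derive. auto. }
    destruct H as [l Hl]. eapply cont_of_derive; eauto. }
  assert (HI : forall n, (RInt (gam ((x + y) / 2)) (un n) (vn n)) ^ 2 <=
                 RInt (gam x) (un n) (vn n) * RInt (gam y) (un n) (vn n)).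
  { intros n.
    rewrite (RInt_ext (gam ((x + y) / 2)) (fun t => p t * q t)) by (intros; rewrite Epq; auto).
    rewrite (RInt_ext (gam x) (fun t => p t * p t)) by (intros; rewrite Ep; auto).
    rewrite (RInt_ext (gam y) (fun t => q t * q t)) by (intros; rewrite Eq2; auto).
    apply CS_RInt. apply un_le_vn.
    intros; apply Hc. pose proof (un_pos n); lra.
    intros; apply Hc. pose proof (un_pos n); lra. }
  assert (L1 := is_lim_seq_mult' _ _ _ _ Hm Hm).
  assert (L2 := is_lim_seq_mult' _ _ _ _ Hx Hy).
  assert (HI' : forall n, RInt (gam ((x + y) / 2)) (un n) (vn n) * RInt (gam ((x + y) / 2)) (un n) (vn n) <=
                 RInt (gam x) (un n) (vn n) * RInt (gam y) (un n) (vn n)).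
  { intros n. specialize (HI n). simpl in HI. lra. }
  assert (R := is_lim_seq_le _ _ _ _ HI' L1 L2). simpl in R. simpl. lra.
Qed.

Lemma Gseq_pos a g : Gseq a g -> 0 < g.
Proof.
  intros H.
  assert (Hm : forall n, RInt (gam a) (un n) (vn n) <= RInt (gam a) (un (S n)) (vn (S n))).
  { intros n.
    assert (h1 : un (S n) <= un n).
    { unfold un. rewrite S_INR. pose proof (pos_INR n). apply Rinv_le_contravar; lra. }
    assert (h2 : vn n <= vn (S n)). { unfold vn. rewrite S_INR. lra. }
    pose proof (un_pos (S n)). pose proof (un_le_vn n).
    rewrite (Chasles _ (un (S n)) (un n) (vn (S n))).
    rewrite (Chasles _ (un n) (vn n) (vn (S n))).
    assert (0 <= RInt (gam a) (un (S n)) (un n)).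
    { apply RInt_ge_0; auto. apply gam_exRInt; auto. intros; apply Rlt_le, gam_pos; lra. }
    assert (0 <= RInt (gam a) (vn n) (vn (S n))).
    { apply RInt_ge_0; auto. apply gam_exRInt; auto; lra. intros; apply Rlt_le, gam_pos; lra. }
    lra.
    all: apply gam_exRInt; auto; lra. }
  assert (H1 := is_lim_seq_incr_compare _ _ H Hm 1%nat).
  assert (0 < RInt (gam a) (un 1) (vn 1)).
  { unfold un, vn; simpl. apply RInt_gt_0. lra.
    intros; apply gam_pos; lra.
    intros x Hx. apply continuity_pt_filterlim, gam_cont. lra. }
  lra.
Qed.

Lemma mono_lim g B : (forall x y, 0 <= x <= y -> g x <= g y) -> (forall x, 0 <= x -> g x <= B) ->
  exists l : R, is_lim g p_infty l.
Proof.
  intros Hm Hb.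
  set (E := fun z => exists x, 0 <= x /\ z = g x).
  assert (HE : bound E). { exists B. intros z [x [Hx ->]]. auto. }
  assert (HE2 : exists z, E z). { exists (g 0), 0. split; [lra|auto]. }
  destruct (completeness E HE HE2) as [l [Hub Hlub]].
  exists l. apply is_lim_spec. intros eps.
  assert (Hx0 : exists x0, 0 <= x0 /\ l - eps < g x0).
  { apply NNPP. intros Hn. assert (is_upper_bound E (l - eps)).
    { intros z [x [Hx ->]]. apply Rnot_lt_le. intros Hc. apply Hn. exists x. auto. }
    specialize (Hlub _ H). pose proof (cond_pos eps). lra. }
  destruct Hx0 as [x0 [Hx0 Hgx0]].
  exists x0. intros x Hx. assert (g x <= l) by (apply Hub; exists x; split; auto; lra).
  assert (g x0 <= g x) by (apply Hm; lra).
  apply Rabs_def1; lra.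
Qed.

Definition hh (s y : R) := Rpower (1 + y ^ 2) (- s).

Lemma hh_pos s y : 0 < hh s y.
Proof. unfold hh, Rpower. apply exp_pos. Qed.

Lemma hh_derive s y : is_derive (hh s) y (- s * hh s y * (2 * y) / (1 + y ^ 2)).
Proof.
  unfold hh, Rpower. auto_derive. nra. replace (1 + y * (y * 1)) with (1 + y ^ 2) by ring. field. nra.
Qed.

Lemma hh_cont s y : continuity_pt (hh s) y.
Proof. eapply cont_of_derive. apply hh_derive. Qed.

Lemma hh_exRInt s a b : a <= b -> ex_RInt (hh s) a b.
Proof. intros. apply exRInt_cont; auto. intros; apply hh_cont. Qed.

Lemma hh_succ s y : hh (s + 1) y = hh s y / (1 + y ^ 2).
Proof.
  unfold hh. replace (- (s + 1)) with (- s + - (1)) by ring.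
  rewrite Rpower_plus, (Rpower_Ropp _ 1), Rpower_1 by nra. reflexivity.
Qed.

Lemma hh_mono s t y : s <= t -> hh t y <= hh s y.
Proof. intros. unfold hh. apply Rle_Rpower. nra. lra. Qed.

Lemma hh_bound s y : 0 <= s -> 0 <= y -> hh s y <= Rpower 2 s * Rpower (1 + y) (- (2 * s)).
Proof.
  intros Hs Hy. unfold hh, Rpower. rewrite <- exp_plus. apply exp_le_mono.
  assert (h : ln ((1 + y) * (1 + y)) <= ln (2 * (1 + y ^ 2))).
  { apply ln_le. nra. assert (0 <= (y - 1) * (y - 1)) by apply Rle_0_sqr. simpl. nra. }
  rewrite !ln_mult in h by nra.
  assert (0 <= s * (ln 2 + ln (1 + y ^ 2) - (ln (1 + y) + ln (1 + y)))) by (apply Rmult_le_pos; lra).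
  lra.
Qed.

Lemma Kb_derive s y : 0 < 2 * s - 1 -> -1 < y ->
  is_derive (fun y => - Rpower 2 s * Rpower (1 + y) (1 - 2 * s) / (2 * s - 1)) y
     (Rpower 2 s * Rpower (1 + y) (- (2 * s))).
Proof.
  intros Hs Hy. unfold Rpower. auto_derive. lra.
  replace (exp ((1 - 2 * s) * ln (1 + y))) with (exp (- (2 * s) * ln (1 + y)) * exp (ln (1 + y))).
  2:{ rewrite <- exp_plus. f_equal. ring. }
  rewrite exp_ln by lra. field. split; lra.
Qed.

Lemma hh_RInt_bound s b : 1 / 2 < s -> 0 <= b -> RInt (hh s) 0 b <= Rpower 2 s / (2 * s - 1).
Proof.
  intros Hs Hb.
  set (Kb := fun y => - Rpower 2 s * Rpower (1 + y) (1 - 2 * s) / (2 * s - 1)).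
  set (k := fun y => Rpower 2 s * Rpower (1 + y) (- (2 * s))).
  assert (Hkc : forall x, -1 < x -> continuity_pt k x).
  { intros x Hx. apply cont_of_ex_derive. unfold k, Rpower. auto_derive. lra. }
  assert (HI : RInt k 0 b = Kb b - Kb 0).
  { apply RInt_FTC; auto. intros x Hx. apply Kb_derive; lra.
    intros; apply Hkc; lra. }
  assert (Hle : RInt (hh s) 0 b <= RInt k 0 b).
  { apply RInt_le; auto. apply hh_exRInt; auto. apply exRInt_cont; auto. intros; apply Hkc; lra.
    intros; apply hh_bound; lra. }
  rewrite HI in Hle. unfold Kb in Hle.
  assert (0 < Rpower 2 s * Rpower (1 + b) (1 - 2 * s) / (2 * s - 1)).
  { unfold Rdiv. apply Rmult_lt_0_compat. apply Rmult_lt_0_compat; unfold Rpower; apply exp_pos.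
    apply Rinv_0_lt_compat; lra. }
  replace (1 + 0) with 1 in Hle by ring. replace (Rpower 1 (1 - 2 * s)) with 1 in Hle by (unfold Rpower; rewrite ln_1, Rmult_0_r, exp_0; reflexivity). 
  replace (- Rpower 2 s * 1 / (2 * s - 1)) with (- (Rpower 2 s / (2 * s - 1))) in Hle by (field; lra).
  replace (- Rpower 2 s * Rpower (1 + b) (1 - 2 * s) / (2 * s - 1)) with
    (- (Rpower 2 s * Rpower (1 + b) (1 - 2 * s) / (2 * s - 1))) in Hle by (field; lra).
  lra.
Qed.

Lemma hh_RInt_mono s x y : 0 <= x <= y -> RInt (hh s) 0 x <= RInt (hh s) 0 y.
Proof.
  intros H. rewrite (Chasles _ 0 x y). 
  assert (0 <= RInt (hh s) x y). { apply RInt_ge_0. lra. apply hh_exRInt; lra. intros; apply Rlt_le, hh_pos. }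
  lra. apply hh_exRInt; lra. apply hh_exRInt; lra.
Qed.

Definition Hv (s : R) : R := real (Lim (fun b => RInt (hh s) 0 b) p_infty).

Lemma Hl s : 1 / 2 < s -> is_lim (fun b => RInt (hh s) 0 b) p_infty (Hv s).
Proof.
  intros Hs. destruct (mono_lim (fun b => RInt (hh s) 0 b) (Rpower 2 s / (2 * s - 1))) as [l Hl].
  - intros; apply hh_RInt_mono; auto.
  - intros; apply hh_RInt_bound; auto.
  - unfold Hv. rewrite (is_lim_unique _ _ _ Hl). exact Hl.
Qed.

Lemma Hv_unique s (l : R) : 1 / 2 < s -> is_lim (fun b => RInt (hh s) 0 b) p_infty l -> Hv s = l.
Proof. intros Hs H. unfold Hv. rewrite (is_lim_unique _ _ _ H). reflexivity. Qed.

Lemma Hv_mono s t : 1 / 2 < s -> s <= t -> Hv t <= Hv s.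
Proof.
  intros Hs Hst.
  assert (H := is_lim_le_loc (fun b => RInt (hh t) 0 b) (fun b => RInt (hh s) 0 b) p_infty (Hv t) (Hv s)).
  simpl in H. apply H. exists 0. intros b Hb. apply RInt_le. lra. apply hh_exRInt; lra. apply hh_exRInt; lra.
  intros; apply hh_mono; auto.
  apply Hl; lra. apply Hl; lra.
Qed.

Lemma Hv_pos s : 1 / 2 < s -> 0 < Hv s.
Proof.
  intros Hs.
  assert (H := is_lim_le_loc (fun _ => RInt (hh s) 0 1) (fun b => RInt (hh s) 0 b) p_infty (RInt (hh s) 0 1) (Hv s)).
  simpl in H. 
  assert (0 < RInt (hh s) 0 1).
  { apply RInt_gt_0. lra. intros; apply hh_pos. intros; apply continuity_pt_filterlim, hh_cont. }
  assert (RInt (hh s) 0 1 <= Hv s).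
  { apply H. exists 1. intros b Hb. apply hh_RInt_mono. lra. apply is_lim_const. apply Hl; auto. }
  lra.
Qed.

Lemma exp_shift1 a L x : 0 < x -> L = ln x -> exp ((a - 1) * L) = exp (a * L) / x.
Proof.
  intros Hx ->. replace ((a - 1) * ln x) with (a * ln x + - ln x) by ring.
  rewrite exp_plus, exp_Ropp, exp_ln by auto. reflexivity.
Qed.

Lemma Hv_rec s : 1 / 2 < s -> Hv (s + 1) = (2 * s - 1) / (2 * s) * Hv s.
Proof.
  intros Hs. apply Hv_unique. lra.
  set (D := fun y => y * hh s y).
  assert (HD : forall y, is_derive D y ((1 - 2 * s) * hh s y + 2 * s * hh (s + 1) y)).
  { intros y. unfold D, hh, Rpower. auto_derive. nra.
    replace (- (s + 1)) with (- s - 1) by ring.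
    rewrite (exp_shift1 (-s) (ln (1 + y ^ 2)) (1 + y ^ 2)) by (auto; nra).
    replace (1 + y * (y * 1)) with (1 + y ^ 2) by ring. field. nra. }
  assert (HDc : forall y, continuity_pt (fun y => (1 - 2 * s) * hh s y + 2 * s * hh (s + 1) y) y).
  { intros y. apply continuity_pt_plus; apply continuity_pt_mult;
    first [apply hh_cont | apply continuity_pt_const; intros ? ?; reflexivity]. }
  assert (E : forall b, 0 <= b -> RInt (hh (s + 1)) 0 b = / (2 * s) * D b + (2 * s - 1) / (2 * s) * RInt (hh s) 0 b).
  { intros b Hb.
    rewrite (RInt_ext (hh (s + 1)) (fun y => / (2 * s) * ((1 - 2 * s) * hh s y + 2 * s * hh (s + 1) y) + (2 * s - 1) / (2 * s) * hh s y)).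
    2:{ intros; apply Rminus_diag_uniq. field. lra. }
    rewrite RInt_lin2.
    rewrite (RInt_FTC D) with (a := 0) (b := b); auto.
    unfold D. apply Rminus_diag_uniq. ring.
    eapply exRInt_FTC; eauto. apply hh_exRInt; auto. }
  apply is_lim_ext_loc with (f := fun b => / (2 * s) * D b + (2 * s - 1) / (2 * s) * RInt (hh s) 0 b).
  { exists 0. intros b Hb. rewrite E; auto; lra. }
  replace ((2 * s - 1) / (2 * s) * Hv s) with (/ (2 * s) * 0 + (2 * s - 1) / (2 * s) * Hv s) by ring.
  apply is_lim_plus'. 
  - apply (is_lim_scal_l D (/ (2 * s)) p_infty 0).
    apply (is_lim_le_le_loc (fun _ => 0) (fun b => Rpower b (- (2 * s - 1)))).
    + exists 0. intros b Hb. unfold D. split.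
      * apply Rlt_le, Rmult_lt_0_compat; auto. apply hh_pos.
      * unfold hh, Rpower. pattern b at 1. rewrite <- (exp_ln b) by auto.
        rewrite <- exp_plus. apply exp_le_mono.
        assert (ln (b * b) <= ln (1 + b ^ 2)) by (apply ln_le; nra).
        rewrite ln_mult in H by auto. nra.
    + apply is_lim_const.
    + apply is_lim_Rpower_neg. lra.
  - apply (is_lim_scal_l _ _ p_infty (Hv s)). apply Hl; auto.
Qed.

Lemma atan_cont x : continuity_pt atan x.
Proof. eapply cont_of_derive. apply is_derive_Reals. apply derivable_pt_lim_atan. Qed.

Lemma Hv1 : Hv 1 = PI / 2.
Proof.
  apply Hv_unique. lra.
  apply is_lim_ext_loc with (f := fun b => PI / 2 - atan (/ b)).
  { exists 0. intros b Hb. rewrite atan_inv by auto.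
    rewrite (RInt_FTC atan); [|lra| |].
    - rewrite atan_0. ring.
    - intros x _. apply is_derive_Reals.
      replace (hh 1 x) with (/ (1 + x ^ 2)). apply derivable_pt_lim_atan.
      unfold hh. rewrite Rpower_Ropp, Rpower_1 by nra. reflexivity.
    - intros; apply hh_cont. }
  assert (H : is_lim (fun b => PI / 2 - atan (/ b)) p_infty (PI / 2 - atan 0)).
  2:{ rewrite atan_0, Rminus_0_r in H. exact H. }
  apply is_lim_minus'. apply is_lim_const.
  apply (is_lim_comp atan (fun b => / b) p_infty (atan 0) 0).
  - apply is_lim_continuity. apply atan_cont.
  - replace (Finite 0) with (Rbar_inv p_infty) by reflexivity. apply is_lim_inv. apply is_lim_id. discriminate.
  - exists 0. intros y Hy Hc. injection Hc. intros. apply Rinv_neq_0_compat in H; auto. lra.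
Qed.

Lemma hh_half y : hh (1 / 2) y = / sqrt (1 + y ^ 2).
Proof.
  unfold hh. rewrite Rpower_Ropp. f_equal. replace (1 / 2) with (/ 2) by field.
  apply Rpower_sqrt. nra.
Qed.

Lemma ratio_sqrt_bounds b : 1 <= b -> 1 - / b <= b * / sqrt (1 + b ^ 2) <= 1.
Proof.
  intros Hb. set (S := sqrt (1 + b ^ 2)).
  assert (HS2 : S * S = 1 + b ^ 2) by (unfold S; apply sqrt_sqrt; nra).
  assert (HS0 : 0 < S) by (unfold S; apply sqrt_lt_R0; nra).
  set (c := / b). assert (Hc : b * c = 1) by (unfold c; field; lra).
  assert (Hc0 : 0 < c <= 1) by (unfold c; split; [apply Rinv_0_lt_compat; lra | rewrite <- Rinv_1; apply Rinv_le_contravar; lra]).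
  assert (HSb : b <= S) by nra.
  assert (HSu : S <= b + c).
  { assert ((b + c) * (b + c) = b ^ 2 + 2 + c * c) by (simpl; nra). nra. }
  split.
  - apply Rmult_le_reg_r with S; auto. rewrite Rmult_assoc, Rinv_l by lra. rewrite Rmult_1_r.
    assert ((1 - c) * S <= (1 - c) * (b + c)) by (apply Rmult_le_compat_l; lra). nra.
  - apply Rmult_le_reg_r with S; auto. rewrite Rmult_assoc, Rinv_l by lra. lra.
Qed.

Lemma Hv32 : Hv (3 / 2) = 1.
Proof.
  apply Hv_unique. lra.
  set (A := fun y => y * hh (1 / 2) y).
  assert (HA : forall y, is_derive A y (hh (3 / 2) y)).
  { intros y. replace (3 / 2) with (1 / 2 + 1) by field. rewrite hh_succ.
    unfold A, hh, Rpower. auto_derive. nra.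
    replace (1 + y * (y * 1)) with (1 + y ^ 2) by ring. field. nra. }
  apply is_lim_ext_loc with (f := fun b => b * / sqrt (1 + b ^ 2)).
  { exists 0. intros b Hb. rewrite (RInt_FTC A); [|lra| |].
    - unfold A. rewrite hh_half. ring.
    - intros; apply HA.
    - intros; apply hh_cont. }
  apply (is_lim_le_le_loc (fun b => 1 - / b) (fun _ => 1)).
  - exists 1. intros b Hb. apply ratio_sqrt_bounds. lra.
  - replace (Finite 1) with (Finite (1 - 0)) by (f_equal; ring).
    apply is_lim_minus'. apply is_lim_const.
    replace (Finite 0) with (Rbar_inv p_infty) by reflexivity. apply is_lim_inv. apply is_lim_id. discriminate.
  - apply is_lim_const.
Qed.

Definition PP t := (2 * t - 1) * Hv t * Hv (t + 1 / 2).

Lemma PP_shift t : 1 / 2 < t -> PP (t + 1 / 2) = PP t.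
Proof.
  intros Ht. unfold PP. replace (t + 1 / 2 + 1 / 2) with (t + 1) by field.
  rewrite Hv_rec by auto. field. lra.
Qed.

Lemma PP_shift_n t m : 1 / 2 < t -> PP (t + INR m / 2) = PP t.
Proof.
  intros Ht. induction m.
  - simpl. f_equal. field.
  - rewrite S_INR. replace (t + (INR m + 1) / 2) with (t + INR m / 2 + 1 / 2) by field.
    rewrite PP_shift. auto. pose proof (pos_INR m). lra.
Qed.

Lemma PP_grid k : (2 <= k)%nat -> PP (INR k / 2) = PI / 2.
Proof.
  intros Hk. replace (INR k / 2) with (1 + INR (k - 2) / 2).
  - rewrite PP_shift_n by lra. unfold PP. replace (1 + 1 / 2) with (3 / 2) by field.
    rewrite Hv1, Hv32. field.
  - rewrite minus_INR by auto. simpl. field.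
Qed.

Lemma nat_floor2 t : 1 / 2 < t -> exists q : nat, INR q <= 2 * t < INR q + 1.
Proof.
  intros Ht. destruct (archimed (2 * t)) as [H1 H2].
  assert (Hz : (1 <= up (2 * t))%Z).
  { apply le_IZR. lra. }
  exists (Z.to_nat (up (2 * t) - 1)).
  rewrite INR_IZR_INZ, Z2Nat.id by lia. rewrite minus_IZR. simpl. lra.
Qed.

Lemma PP_const t : 1 / 2 < t -> PP t = PI / 2.
Proof.
  intros Ht. destruct (nat_floor2 t Ht) as [q [Hq1 Hq2]].
  apply Rminus_diag_uniq.
  apply (limit_zero _ (INR q - 1) (PI / 2) 2). intros m Hm.
  set (k := (q + m)%nat).
  assert (Hk : INR k = INR q + INR m) by (unfold k; apply plus_INR).
  assert (Hm2 : 2 <= INR m) by (apply le_INR in Hm; simpl in Hm; lra).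
  set (T := t + INR m / 2).
  rewrite <- (PP_shift_n t m Ht). fold T.
  assert (HT1 : INR k / 2 <= T) by (unfold T; lra).
  assert (HT2 : T < (INR k + 1) / 2) by (unfold T; lra).
  assert (Hk2 : 2 <= INR k) by (pose proof (pos_INR q); lra).
  assert (Gk : PP (INR k / 2) = PI / 2) by (apply PP_grid; lia).
  assert (Gk1 : PP (INR (S k) / 2) = PI / 2) by (apply PP_grid; lia).
  rewrite S_INR in Gk1.
  unfold PP in Gk, Gk1.
  replace ((INR k + 1) / 2 + 1 / 2) with (INR k / 2 + 1) in Gk1 by field.
  assert (Hpos : forall s, 1 / 2 < s -> 0 < Hv s) by (intros; apply Hv_pos; auto).
  assert (U1 : Hv T <= Hv (INR k / 2)) by (apply Hv_mono; lra).
  assert (U2 : Hv (T + 1 / 2) <= Hv (INR k / 2 + 1 / 2)) by (apply Hv_mono; lra).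
  assert (L1 : Hv ((INR k + 1) / 2) <= Hv T) by (apply Hv_mono; lra).
  assert (L2 : Hv (INR k / 2 + 1) <= Hv (T + 1 / 2)) by (apply Hv_mono; lra).
  pose proof (Hpos T ltac:(lra)). pose proof (Hpos (T + 1/2) ltac:(lra)).
  pose proof (Hpos (INR k / 2) ltac:(lra)). pose proof (Hpos (INR k / 2 + 1 / 2) ltac:(lra)).
  pose proof (Hpos ((INR k + 1) / 2) ltac:(lra)). pose proof (Hpos (INR k / 2 + 1) ltac:(lra)).
  assert (UP : Hv T * Hv (T + 1 / 2) <= Hv (INR k / 2) * Hv (INR k / 2 + 1 / 2)).
  { apply Rmult_le_compat; lra. }
  assert (LO : Hv ((INR k + 1) / 2) * Hv (INR k / 2 + 1) <= Hv T * Hv (T + 1 / 2)).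
  { apply Rmult_le_compat; lra. }
  unfold PP.
  set (X := Hv T * Hv (T + 1 / 2)) in *.
  set (Y := Hv (INR k / 2) * Hv (INR k / 2 + 1 / 2)) in *.
  set (Z := Hv ((INR k + 1) / 2) * Hv (INR k / 2 + 1)) in *.
  assert (EY : (INR k - 1) * Y = PI / 2) by (rewrite <- Gk; unfold Y; replace (2 * (INR k / 2) - 1) with (INR k - 1) by field; ring).
  assert (EZ : INR k * Z = PI / 2) by (rewrite <- Gk1; unfold Z; replace (2 * ((INR k + 1) / 2) - 1) with (INR k) by field; ring).
  replace (INR q - 1 + INR m) with (INR k - 1) by lra.
  assert (HPI : 0 < PI) by apply PI_RGT_0.
  assert (HZ : 0 < Z) by (unfold Z; apply Rmult_lt_0_compat; lra).
  assert (HX : 0 < X) by (unfold X; apply Rmult_lt_0_compat; lra).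
  assert (Up : (2 * T - 1) * X <= INR k * Y) by (apply Rmult_le_compat; lra).
  assert (Lo : (INR k - 1) * Z <= (2 * T - 1) * X) by (apply Rmult_le_compat; lra).
  set (D := (2 * T - 1) * X) in *.
  assert (U3 : (INR k - 1) * D <= (INR k - 1) * (INR k * Y)) by (apply Rmult_le_compat_l; lra).
  assert (U4 : (INR k - 1) * (INR k * Y) = INR k * (PI / 2)) by (rewrite <- EY; ring).
  assert (L3 : (INR k - 1) * ((INR k - 1) * Z) <= (INR k - 1) * D) by (apply Rmult_le_compat_l; lra).
  assert (L4 : (INR k - 1) * ((INR k - 1) * Z) = (INR k - 1) * (PI / 2) - (INR k - 1) * Z) by (rewrite <- EZ; ring).
  assert (L5 : (INR k - 1) * Z <= PI / 2) by (rewrite <- EZ; nra).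
  replace ((2 * T - 1) * Hv T * Hv (T + 1 / 2)) with D by (unfold D, X; ring).
  unfold Rabs. destruct (Rcase_abs (D - PI / 2)).
  - replace (- (D - PI / 2) * (INR k - 1)) with ((INR k - 1) * (PI / 2) - (INR k - 1) * D) by ring.
    set (a1 := (INR k - 1) * D) in *. set (a2 := (INR k - 1) * Z) in *.
    set (a3 := (INR k - 1) * ((INR k - 1) * Z)) in *. lra.
  - replace ((D - PI / 2) * (INR k - 1)) with ((INR k - 1) * D - (INR k - 1) * (PI / 2)) by ring.
    set (a1 := (INR k - 1) * D) in *. set (a4 := (INR k - 1) * (INR k * Y)) in *. lra.
Qed.

Fixpoint gseq (a g : R) (n : nat) : R :=
  match n with O => g | S n => (a + INR n) * gseq a g n end.

Lemma gseq_Gseq a g n : 0 < a -> Gseq a g -> Gseq (a + INR n) (gseq a g n).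
Proof.
  intros Ha H. induction n.
  - simpl. rewrite Rplus_0_r. exact H.
  - simpl gseq. rewrite S_INR. replace (a + (INR n + 1)) with (a + INR n + 1) by ring.
    apply Gseq_succ; auto. pose proof (pos_INR n). lra.
Qed.

Lemma gseq_pos a g n : 0 < a -> Gseq a g -> 0 < gseq a g n.
Proof. intros Ha H. apply (Gseq_pos (a + INR n)). apply gseq_Gseq; auto. Qed.

Lemma key_bounds Q t g h H Hm Hp :
  1 < t -> 0 < g -> 0 < h -> 0 < H -> 0 < Hm -> 0 < Hp ->
  Q ^ 2 * h ^ 2 = g ^ 2 * H ^ 2 ->
  g ^ 2 <= (t - 1 / 2) * h ^ 2 ->
  (t - 1 / 2) ^ 2 * h ^ 2 <= t * g ^ 2 ->
  H <= Hm -> Hp <= H ->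
  (2 * t - 2) * Hm * H = PI / 2 ->
  (2 * t - 1) * H * Hp = PI / 2 ->
  Rabs (Q ^ 2 - PI / 4) * (t - 1) <= PI / 8.
Proof.
  intros Ht Hg Hh HH HHm HHp EQ B1 B2 M1 M2 P1 P2.
  assert (H2m : H ^ 2 <= Hm * H) by (simpl; nra).
  assert (H2p : Hp * H <= H ^ 2) by (simpl; nra).
  assert (Hh2 : 0 < h ^ 2) by (simpl; nra).
  assert (U : Q ^ 2 <= (t - 1 / 2) * H ^ 2).
  { apply Rmult_le_reg_r with (h ^ 2); auto. rewrite EQ.
    replace ((t - 1 / 2) * H ^ 2 * h ^ 2) with (((t - 1 / 2) * h ^ 2) * H ^ 2) by ring.
    apply Rmult_le_compat_r; auto. simpl; nra. }
  assert (L : (t - 1 / 2) ^ 2 * H ^ 2 <= t * Q ^ 2).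
  { apply Rmult_le_reg_r with (h ^ 2); auto.
    replace (t * Q ^ 2 * h ^ 2) with (t * (Q ^ 2 * h ^ 2)) by ring. rewrite EQ.
    replace ((t - 1 / 2) ^ 2 * H ^ 2 * h ^ 2) with (((t - 1 / 2) ^ 2 * h ^ 2) * H ^ 2) by ring.
    replace (t * (g ^ 2 * H ^ 2)) with ((t * g ^ 2) * H ^ 2) by ring.
    apply Rmult_le_compat_r; auto. simpl; nra. }
  assert (HmH : Hm * H = PI / (4 * (t - 1))).
  { assert (E1 : PI = 2 * ((2 * t - 2) * Hm * H)) by lra. rewrite E1. field. lra. }
  assert (HpH : Hp * H = PI / (4 * (t - 1 / 2))).
  { assert (E1 : PI = 2 * ((2 * t - 1) * H * Hp)) by lra. rewrite E1. field. lra. }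
  assert (U2 : Q ^ 2 <= (t - 1 / 2) * (PI / (4 * (t - 1)))).
  { rewrite <- HmH. eapply Rle_trans; [exact U|]. apply Rmult_le_compat_l; lra. }
  assert (L2 : (t - 1 / 2) ^ 2 * (PI / (4 * (t - 1 / 2))) <= t * Q ^ 2).
  { rewrite <- HpH. eapply Rle_trans; [|exact L]. apply Rmult_le_compat_l; [simpl; nra|lra]. }
  replace ((t - 1 / 2) * (PI / (4 * (t - 1)))) with (PI / 4 + PI / (8 * (t - 1))) in U2 by (field; lra).
  replace ((t - 1 / 2) ^ 2 * (PI / (4 * (t - 1 / 2)))) with (t * (PI / 4) - PI / 8) in L2 by (field; lra).
  assert (HPI : 0 < PI) by apply PI_RGT_0.
  unfold Rabs. destruct (Rcase_abs (Q ^ 2 - PI / 4)).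
  - assert (L3 : PI / 4 - Q ^ 2 <= PI / (8 * t)).
    { apply Rmult_le_reg_l with t; [lra|]. replace (t * (PI / (8 * t))) with (PI / 8) by (field; lra). lra. }
    assert (PI / (8 * t) * (t - 1) <= PI / 8).
    { replace (PI / (8 * t) * (t - 1)) with (PI / 8 - PI / (8 * t)) by (field; lra).
      assert (0 < PI / (8 * t)) by (apply Rdiv_lt_0_compat; lra). lra. }
    assert (- (Q ^ 2 - PI / 4) * (t - 1) <= PI / (8 * t) * (t - 1)) by (apply Rmult_le_compat_r; lra).
    lra.
  - assert ((Q ^ 2 - PI / 4) * (t - 1) <= PI / (8 * (t - 1)) * (t - 1)) by (apply Rmult_le_compat_r; lra).
    replace (PI / (8 * (t - 1)) * (t - 1)) with (PI / 8) in H0 by (field; lra). lra.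
Qed.

Lemma norm_identity r c d : 0 < r -> is_Gamma ((r + 1) / 2) c -> is_Gamma (r / 2) d ->
  2 * c * Hv ((r + 1) / 2) = sqrt PI * d.
Proof.
  intros Hr Hc Hd. set (s := (r + 1) / 2).
  assert (Hs : 1 / 2 < s) by (unfold s; lra).
  assert (Gc : Gseq s c) by (apply Gamma_to_seq; auto).
  assert (Gd : Gseq (s - 1 / 2) d).
  { replace (s - 1 / 2) with (r / 2) by (unfold s; field). apply Gamma_to_seq; auto. }
  assert (Hs0 : 0 < s) by lra. assert (Hs1 : 0 < s - 1 / 2) by lra.
  set (g := gseq s c). set (h := gseq (s - 1 / 2) d).
  assert (Gg : forall n, Gseq (s + INR n) (g n)) by (intros; apply gseq_Gseq; auto).
  assert (Gh : forall n, Gseq (s - 1 / 2 + INR n) (h n)) by (intros; apply gseq_Gseq; auto).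
  assert (gp : forall n, 0 < g n) by (intros; apply (gseq_pos s); auto).
  assert (hp : forall n, 0 < h n) by (intros; apply (gseq_pos (s - 1 / 2)); auto).
  assert (c0 : 0 < c) by (apply (Gseq_pos s); auto).
  assert (d0 : 0 < d) by (apply (Gseq_pos (s - 1 / 2)); auto).
  assert (Inv : forall n, g n * Hv (s + INR n) * d = c * Hv s * h n).
  { induction n.
    - unfold g, h. simpl gseq. rewrite Rplus_0_r. ring.
    - unfold g, h. simpl gseq. fold g; fold h. rewrite S_INR.
      replace (s + (INR n + 1)) with (s + INR n + 1) by ring.
      rewrite Hv_rec by (pose proof (pos_INR n); lra).
      replace (s - 1 / 2 + INR n) with (s + INR n - 1 / 2) by ring.
      replace ((s + INR n) * g n * ((2 * (s + INR n) - 1) / (2 * (s + INR n)) * Hv (s + INR n)) * d)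
        with ((s + INR n - 1 / 2) * (g n * Hv (s + INR n) * d)) by (field; pose proof (pos_INR n); lra).
      rewrite IHn. ring. }
  set (Q := c * Hv s / d).
  assert (HQ : 0 < Q) by (unfold Q; apply Rdiv_lt_0_compat; auto; apply Rmult_lt_0_compat; auto; apply Hv_pos; auto).
  assert (Q2 : Q ^ 2 = PI / 4).
  { apply Rminus_diag_uniq. apply (limit_zero _ (s - 1) (PI / 8) 1). intros n Hn.
    set (t := s + INR n).
    assert (Hn1 : 1 <= INR n) by (apply le_INR in Hn; simpl in Hn; lra).
    assert (Ht : 1 < t) by (unfold t; lra).
    replace (s - 1 + INR n) with (t - 1) by (unfold t; ring).
    assert (hS : h (S n) = (t - 1 / 2) * h n).
    { unfold h. simpl gseq. fold h. unfold t. f_equal. ring. }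
    assert (gS : g (S n) = t * g n) by (unfold g; simpl gseq; fold g; reflexivity).
    apply (key_bounds Q t (g n) (h n) (Hv t) (Hv (t - 1 / 2)) (Hv (t + 1 / 2))); auto.
    + apply Hv_pos; lra. + apply Hv_pos; lra. + apply Hv_pos; lra.
    + assert (E := Inv n). fold t in E. unfold Q.
      apply Rmult_eq_reg_r with (d ^ 2). 2: (simpl; nra).
      replace ((c * Hv s / d) ^ 2 * h n ^ 2 * d ^ 2) with ((c * Hv s * h n) ^ 2) by (field; lra).
      rewrite <- E. ring.
    + assert (L := Gseq_logconv _ _ _ _ (g n) (Gh n) (Gh (S n))).
      replace ((s - 1 / 2 + INR n + (s - 1 / 2 + INR (S n))) / 2) with t in L by (unfold t; rewrite S_INR; field).
      specialize (L (Gg n)). rewrite hS in L. simpl in L |- *. nra.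
    + assert (L := Gseq_logconv _ _ _ _ (h (S n)) (Gg n) (Gg (S n))).
      replace ((s + INR n + (s + INR (S n))) / 2) with (s - 1 / 2 + INR (S n)) in L by (rewrite S_INR; field).
      specialize (L (Gh (S n))). rewrite hS, gS in L. fold t in L. simpl in L |- *. nra.
    + apply Hv_mono; lra.
    + apply Hv_mono; lra.
    + assert (P := PP_const (t - 1 / 2) ltac:(lra)). unfold PP in P.
      replace (t - 1 / 2 + 1 / 2) with t in P by ring. rewrite <- P. field.
    + apply PP_const; lra. }
  assert (HPI : 0 < PI) by apply PI_RGT_0.
  assert (Es : sqrt PI * sqrt PI = PI) by (apply sqrt_sqrt; lra).
  assert (Hsq : 0 < sqrt PI) by (apply sqrt_lt_R0; lra).
  assert (EQ : (Q - sqrt PI / 2) * (Q + sqrt PI / 2) = 0).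
  { replace ((Q - sqrt PI / 2) * (Q + sqrt PI / 2)) with (Q ^ 2 - (sqrt PI * sqrt PI) / 4) by (simpl; field).
    rewrite Q2, Es. field. }
  apply Rmult_integral in EQ. destruct EQ as [EQ|EQ]; [|lra].
  assert (Q = sqrt PI / 2) by lra. unfold Q in H.
  apply Rmult_eq_reg_r with (/ d). 2: (apply Rinv_neq_0_compat; lra).
  replace (2 * c * Hv s * / d) with (2 * (c * Hv s / d)) by (field; lra). rewrite H. field. lra.
Qed.

Lemma exRInt_all f : (forall x, continuity_pt f x) -> forall a b, ex_RInt f a b.
Proof.
  intros Hc a b. apply (ex_RInt_continuous (V := R_CompleteNormedModule)).
  intros. apply continuity_pt_filterlim. auto.
Qed.

Lemma improper_seq f x l : (forall x, continuity_pt f x) -> improper_lower f x l ->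
  is_lim_seq (fun n => RInt f (- INR n) x) l.
Proof.
  intros Hc H. apply is_lim_seq_spec. intros eps.
  destruct (H eps (cond_pos eps)) as [M HM].
  destruct (nat_large (- M)) as [N HN]. exists N. intros n Hn.
  destruct (HM (- INR n) ltac:(specialize (HN n Hn); lra)) as [w [Hw Hwe]].
  rewrite (RInt_eq_RInt _ _ _ _ Hw). exact Hwe.
Qed.

Lemma cdf_diff f F : (forall x, continuity_pt f x) -> is_cdf_of f F ->
  forall x y, F y = F x + RInt f x y.
Proof.
  intros Hc HF x y.
  assert (Hx := improper_seq f x (F x) Hc (HF x)).
  assert (Hy := improper_seq f y (F y) Hc (HF y)).
  assert (Hy' : is_lim_seq (fun n => RInt f (- INR n) x + RInt f x y) (F x + RInt f x y)).
  { apply is_lim_seq_plus'; auto. apply is_lim_seq_const. }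
  eapply is_lim_seq_ext in Hy'.
  2:{ intros n. rewrite <- Chasles. reflexivity. apply exRInt_all; auto. apply exRInt_all; auto. }
  apply is_lim_seq_unique in Hy. apply is_lim_seq_unique in Hy'.
  rewrite Hy in Hy'. injection Hy'. auto.
Qed.

Lemma cdf_deriv f F : (forall x, continuity_pt f x) -> is_cdf_of f F ->
  forall x, is_derive F x (f x).
Proof.
  intros Hc HF x.
  apply is_derive_ext with (f := fun y => F 0 + RInt f 0 y).
  { intros t. symmetry. apply cdf_diff; auto. }
  assert (H1 : is_derive (fun y => RInt f 0 y) x (f x)).
  { apply (is_derive_RInt (V := R_CompleteNormedModule) f (fun y => RInt f 0 y) 0).
    - apply filter_forall. intros b. apply (RInt_correct (V := R_CompleteNormedModule)). apply exRInt_all; auto.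
    - apply continuity_pt_filterlim; auto. }
  assert (H2 := is_derive_plus _ _ x _ _ (is_derive_const (F 0) x) H1).
  rewrite plus_zero_l in H2. exact H2.
Qed.

Lemma RInt_odd f x : (forall x, continuity_pt f x) -> (forall y, f (- y) = f y) ->
  RInt f 0 (- x) = - RInt f 0 x.
Proof.
  intros Hc He.
  assert (H := RInt_comp_lin (V := R_CompleteNormedModule) f (-1) 0 0 x).
  replace (-1 * 0 + 0) with 0 in H by ring. replace (-1 * x + 0) with (- x) in H by ring.
  rewrite <- H by (apply exRInt_all; auto).
  rewrite (RInt_ext (fun y => scal (-1) (f (-1 * y + 0))) (fun y => -1 * f y)).
  2:{ intros. unfold scal; simpl; unfold mult; simpl. replace (-1 * x0 + 0) with (- x0) by ring. rewrite He. reflexivity. }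
  rewrite (RInt_ext (fun y => -1 * f y) (fun y => -1 * f y + 0 * f y)) by (intros; apply Rminus_diag_uniq; ring).
  rewrite RInt_lin2 by (apply exRInt_all; auto). apply Rminus_diag_uniq. ring.
Qed.

Definition Kc r c d := c / (sqrt (PI * r) * d).

Lemma sd_hh r c d x : 0 < r ->
  student_density r c d x = Kc r c d * hh ((r + 1) / 2) (x / sqrt r).
Proof.
  intros Hr. unfold student_density, hh, Kc. f_equal. f_equal.
  unfold Rdiv at 2. rewrite Rpow_mult_distr. rewrite <- Rinv_pow.
  rewrite pow2_sqrt by lra. reflexivity.
  apply Rgt_not_eq. apply sqrt_lt_R0. auto.
Qed.

Lemma sd_pos r c d x : 0 < Kc r c d -> 0 < student_density r c d x.
Proof. intros. unfold student_density. apply Rmult_lt_0_compat; auto. unfold Rpower; apply exp_pos. Qed.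

Lemma sd_derive r c d x : 0 < r ->
  is_derive (student_density r c d) x
    (- (r + 1) * x * student_density r c d x / (r * (1 + x ^ 2 / r))).
Proof.
  intros Hr. unfold student_density, Rpower. auto_derive.
  - assert (0 <= x ^ 2 / r) by (apply Rdiv_le_0_compat; [apply pow2_ge_0|lra]). lra.
  - replace (1 + x * (x * 1) * / r) with (1 + x ^ 2 / r) by (unfold Rdiv; simpl; ring).
    assert (0 <= x ^ 2 / r) by (apply Rdiv_le_0_compat; [apply pow2_ge_0|lra]).
    set (E := exp (- ((r + 1) / 2) * ln (1 + x ^ 2 / r))).
    set (K := c / (sqrt (PI * r) * d)). set (P := 1 + x ^ 2 / r).
    field. split; unfold P; lra.
Qed.

Lemma sd_cont r c d x : 0 < r -> continuity_pt (student_density r c d) x.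
Proof. intros. eapply cont_of_derive. apply sd_derive; auto. Qed.

Lemma sd_even r c d x : student_density r c d (- x) = student_density r c d x.
Proof. unfold student_density. replace ((- x) ^ 2) with (x ^ 2) by ring. reflexivity. Qed.

Lemma RInt_sd_scale r c d b : 0 < r ->
  RInt (student_density r c d) 0 b = Kc r c d * sqrt r * RInt (hh ((r + 1) / 2)) 0 (b / sqrt r).
Proof.
  intros Hr. assert (Hs : 0 < sqrt r) by (apply sqrt_lt_R0; auto).
  set (s := (r + 1) / 2).
  assert (H := RInt_comp_lin (V := R_CompleteNormedModule) (hh s) (/ sqrt r) 0 0 b).
  replace (/ sqrt r * 0 + 0) with 0 in H by ring. replace (/ sqrt r * b + 0) with (b / sqrt r) in H by (unfold Rdiv; ring).
  rewrite <- H by (apply exRInt_all; intros; apply hh_cont).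
  rewrite (RInt_ext (student_density r c d) (fun y => (Kc r c d * sqrt r) * scal (/ sqrt r) (hh s (/ sqrt r * y + 0)) + 0 * 0)).
  2:{ intros. unfold scal; simpl; unfold mult; simpl. rewrite sd_hh by auto. fold s.
      replace (/ sqrt r * x + 0) with (x / sqrt r) by (unfold Rdiv; ring). field. lra. }
  rewrite RInt_lin2. rewrite Rmult_0_l, Rplus_0_r. reflexivity.
  apply exRInt_all. intros. apply continuity_pt_mult. apply continuity_pt_const; intros ? ?; reflexivity.
  apply (continuity_pt_comp (fun y => / sqrt r * y + 0) (hh s)).
  apply continuity_pt_plus. apply continuity_pt_mult. apply continuity_pt_const; intros ? ?; reflexivity.
  apply continuity_pt_id. apply continuity_pt_const; intros ? ?; reflexivity. apply hh_cont.
  apply exRInt_all. intros; apply continuity_pt_const; intros ? ?; reflexivity.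
Qed.

Lemma Rbar_mult_p_pos e : 0 < e -> Rbar_mult p_infty e = p_infty.
Proof.
  intros He. unfold Rbar_mult, Rbar_mult'. destruct (Rle_dec 0 e) as [H|H]; [|exfalso; lra].
  destruct (Rle_lt_or_eq_dec 0 e H); [reflexivity|exfalso; lra].
Qed.

Lemma Kc_pos r c d : 0 < r -> is_Gamma ((r + 1) / 2) c -> is_Gamma (r / 2) d -> 0 < Kc r c d.
Proof.
  intros Hr Hc Hd. unfold Kc.
  assert (0 < c) by (apply (Gseq_pos ((r + 1) / 2)); apply Gamma_to_seq; auto).
  assert (0 < d) by (apply (Gseq_pos (r / 2)); apply Gamma_to_seq; auto).
  assert (0 < sqrt (PI * r)) by (apply sqrt_lt_R0; pose proof PI_RGT_0; nra).
  apply Rdiv_lt_0_compat; auto. nra.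
Qed.

Lemma F0_half r c d F : 0 < r -> is_Gamma ((r + 1) / 2) c -> is_Gamma (r / 2) d ->
  is_cdf_of (student_density r c d) F -> F 0 = 1 / 2.
Proof.
  intros Hr Hc Hd HF.
  set (s := (r + 1) / 2). assert (Hs : 1 / 2 < s) by (unfold s; lra).
  assert (Hsr : 0 < sqrt r) by (apply sqrt_lt_R0; auto).
  assert (Hcont : forall x, continuity_pt (student_density r c d) x) by (intros; apply sd_cont; auto).
  assert (H1 := improper_seq _ 0 (F 0) Hcont (HF 0)).
  assert (H2 : is_lim_seq (fun n => Kc r c d * sqrt r * RInt (hh s) 0 (INR n / sqrt r)) (Kc r c d * sqrt r * Hv s)).
  { apply (is_lim_seq_scal_l _ _ (Hv s)).
    apply (is_lim_comp_seq (fun b => RInt (hh s) 0 b) (fun n => INR n / sqrt r) p_infty (Hv s)).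
    apply Hl; auto. exists 0%nat; intros; discriminate.
    unfold Rdiv. rewrite <- (Rbar_mult_p_pos (/ sqrt r)) by (apply Rinv_0_lt_compat; auto).
    apply is_lim_seq_scal_r. apply is_lim_seq_INR. }
  assert (E : forall n, RInt (student_density r c d) (- INR n) 0 = Kc r c d * sqrt r * RInt (hh s) 0 (INR n / sqrt r)).
  { intros n. rewrite <- (opp_RInt_swap (V := R_CompleteNormedModule)) by (apply exRInt_all; auto).
    rewrite RInt_odd; auto.
    2:{ intros; apply sd_even. }
    rewrite RInt_sd_scale by auto. unfold opp; simpl. apply Ropp_involutive. }
  apply is_lim_seq_ext with (v := fun n => Kc r c d * sqrt r * RInt (hh s) 0 (INR n / sqrt r)) in H1; auto.
  apply is_lim_seq_unique in H1. apply is_lim_seq_unique in H2. rewrite H1 in H2. injection H2. intros ->.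
  assert (N := norm_identity r c d Hr Hc Hd). fold s in N.
  unfold Kc. rewrite sqrt_mult by (pose proof PI_RGT_0; lra).
  assert (0 < sqrt PI) by (apply sqrt_lt_R0; apply PI_RGT_0).
  assert (0 < d) by (apply (Gseq_pos (r / 2)); apply Gamma_to_seq; auto).
  replace (c / (sqrt PI * sqrt r * d) * sqrt r * Hv s) with ((2 * c * Hv s) / (2 * sqrt PI * d)) by (field; lra).
  rewrite N. field. lra.
Qed.

Lemma RInt_scal_R f k a b : ex_RInt f a b -> RInt (fun t => k * f t) a b = k * RInt f a b.
Proof.
  intros H. apply is_RInt_unique. exact (is_RInt_scal _ _ _ k _ (RInt_correct f a b H)).
Qed.

Definition Gf r c d x := student_density r c d x * (1 + x ^ 2 / r) / (- x).

Lemma phi_pos r x : 0 < r -> 0 < 1 + x ^ 2 / r.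
Proof. intros. assert (0 <= x ^ 2 / r) by (apply Rdiv_le_0_compat; [apply pow2_ge_0|lra]). lra. Qed.

Lemma Gf_pos r c d x : 0 < r -> 0 < Kc r c d -> x < 0 -> 0 < Gf r c d x.
Proof.
  intros. unfold Gf. apply Rdiv_lt_0_compat; [|lra]. apply Rmult_lt_0_compat.
  apply sd_pos; auto. apply phi_pos; auto.
Qed.

Lemma Gf_derive r c d x : 0 < r -> x < 0 ->
  is_derive (Gf r c d) x (student_density r c d x * (1 + / x ^ 2)).
Proof.
  intros Hr Hx. unfold Gf, student_density, Rpower. auto_derive.
  - pose proof (phi_pos r x Hr). unfold Rdiv in H. simpl in H. repeat split; auto; lra.
  - replace (1 + x * (x * 1) * / r) with (1 + x ^ 2 / r) by (unfold Rdiv; simpl; ring).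
    set (E := exp (- ((r + 1) / 2) * ln (1 + x ^ 2 / r))).
    set (K := c / (sqrt (PI * r) * d)).
    pose proof (phi_pos r x Hr).
    assert (0 < x ^ 2) by (simpl; nra).
    assert (r + x ^ 2 <> 0) by lra.
    field. repeat split; lra.
Qed.

Lemma Gf'_cont r c d x : 0 < r -> x < 0 ->
  continuity_pt (fun t => student_density r c d t * (1 + / t ^ 2)) x.
Proof.
  intros Hr Hx. apply continuity_pt_mult. apply sd_cont; auto.
  apply cont_of_ex_derive. auto_derive. simpl; nra.
Qed.

Lemma F_le_G r c d F x : 0 < r -> 0 < Kc r c d -> is_cdf_of (student_density r c d) F ->
  x < 0 -> F x <= Gf r c d x.
Proof.
  intros Hr HK HF Hx.
  assert (Hc : forall x, continuity_pt (student_density r c d) x) by (intros; apply sd_cont; auto).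
  assert (H1 := improper_seq _ x (F x) Hc (HF x)).
  assert (H2 := is_lim_seq_const (Gf r c d x)).
  refine (is_lim_seq_le_loc _ _ _ _ _ H1 H2).
  destruct (nat_large (- x)) as [N HN]. exists N. intros n Hn. specialize (HN n Hn).
  set (a := - INR n). assert (Ha : a < x) by (unfold a; lra).
  assert (HI : RInt (fun t => student_density r c d t * (1 + / t ^ 2)) a x = Gf r c d x - Gf r c d a).
  { apply RInt_FTC. lra. intros; apply Gf_derive; lra. intros; apply Gf'_cont; lra. }
  assert (Hle : RInt (student_density r c d) a x <= RInt (fun t => student_density r c d t * (1 + / t ^ 2)) a x).
  { apply RInt_le. lra. apply exRInt_all; auto. apply exRInt_cont. lra. intros; apply Gf'_cont; lra.
    intros t Ht. pose proof (sd_pos r c d t HK).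
    assert (0 <= / t ^ 2) by (apply Rlt_le, Rinv_0_lt_compat; simpl; nra). nra. }
  pose proof (Gf_pos r c d a Hr HK ltac:(lra)). lra.
Qed.

Lemma Gf_exp r c d a : 0 < r -> a < 0 ->
  Gf r c d a = Kc r c d * exp ((1 - (r + 1) / 2) * ln (1 + a ^ 2 / r) - ln (- a)).
Proof.
  intros Hr Ha. unfold Gf, student_density. fold (Kc r c d). unfold Rpower.
  pose proof (phi_pos r a Hr). set (K := Kc r c d).
  replace ((1 - (r + 1) / 2) * ln (1 + a ^ 2 / r) - ln (- a)) with
    (- ((r + 1) / 2) * ln (1 + a ^ 2 / r) + ln (1 + a ^ 2 / r) + - ln (-a)) by ring.
  rewrite !exp_plus, exp_Ropp, !exp_ln by lra. field. lra.
Qed.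

Lemma Gf_bound r c d a : 0 < r -> 0 < Kc r c d -> a <= -1 ->
  Gf r c d a <= Kc r c d * exp (Rabs (1 - (r + 1) / 2) * ln (1 + 1 / r) - Rmin 1 r * ln (- a)).
Proof.
  intros Hr HK Ha. rewrite Gf_exp by lra.
  apply Rmult_le_compat_l; [lra|]. apply exp_le_mono.
  assert (HL : 0 <= ln (- a)) by (rewrite <- ln_1; apply ln_le; lra).
  assert (Hp1 : 0 <= ln (1 + a ^ 2 / r)).
  { rewrite <- ln_1; apply ln_le. lra. assert (0 <= a ^ 2 / r) by (apply Rdiv_le_0_compat; [apply pow2_ge_0|lra]). lra. }
  assert (Hln : 0 <= ln (1 + 1 / r)).
  { rewrite <- ln_1; apply ln_le. lra. assert (0 < 1 / r) by (apply Rdiv_lt_0_compat; lra). lra. }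
  destruct (Rle_dec 1 r) as [H1|H1].
  - rewrite Rmin_left by lra.
    assert (0 <= Rabs (1 - (r + 1) / 2) * ln (1 + 1 / r)) by (apply Rmult_le_pos; [apply Rabs_pos|auto]).
    assert ((1 - (r + 1) / 2) * ln (1 + a ^ 2 / r) <= 0).
    { apply Rmult_le_0_r; lra. }
    lra.
  - rewrite Rmin_right by lra. rewrite Rabs_pos_eq by lra.
    assert (Hb : ln (1 + a ^ 2 / r) <= ln (1 + 1 / r) + ln (- a) + ln (- a)).
    { rewrite <- !ln_mult; try lra.
      apply ln_le. apply phi_pos; auto.
      assert (Ha2 : 1 <= a ^ 2) by (simpl; nra).
      replace ((1 + 1 / r) * - a * - a) with ((1 + 1 / r) * a ^ 2) by (simpl; ring).
      assert (a ^ 2 / r = (1 / r) * a ^ 2) by (unfold Rdiv; ring).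
      assert (0 < 1 / r) by (apply Rdiv_lt_0_compat; lra).
      nra.
      apply Rmult_lt_0_compat; [|lra]. assert (0 < 1 / r) by (apply Rdiv_lt_0_compat; lra). lra.
      assert (0 < 1 / r) by (apply Rdiv_lt_0_compat; lra). lra. }
    assert ((1 - (r + 1) / 2) * ln (1 + a ^ 2 / r) <= (1 - (r + 1) / 2) * (ln (1 + 1 / r) + ln (- a) + ln (- a))).
    { apply Rmult_le_compat_l; lra. }
    lra.
Qed.

Lemma Gf_lim r c d : 0 < r -> 0 < Kc r c d -> is_lim_seq (fun n => Gf r c d (- INR n)) 0.
Proof.
  intros Hr HK.
  set (C0 := Rabs (1 - (r + 1) / 2) * ln (1 + 1 / r)). set (m := Rmin 1 r).
  assert (Hm : 0 < m) by (unfold m; apply Rmin_glb_lt; lra).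
  apply is_lim_seq_le_le_loc with (u := fun _ => 0)
    (w := fun n => (Kc r c d * exp C0) * Rpower (INR n) (- m)).
  - exists 1%nat. intros n Hn. assert (Hn' : 1 <= INR n) by (apply le_INR in Hn; simpl in Hn; lra).
    split. apply Rlt_le, Gf_pos; auto; lra.
    eapply Rle_trans. apply Gf_bound; auto; lra.
    rewrite Ropp_involutive. unfold Rpower. rewrite Rmult_assoc, <- exp_plus. right. f_equal. unfold C0, m, Rminus. rewrite Ropp_mult_distr_l. reflexivity.
  - apply is_lim_seq_const.
  - replace (Finite 0) with (Rbar_mult (Kc r c d * exp C0) 0) by (simpl; f_equal; ring).
    apply is_lim_seq_scal_l.
    apply (is_lim_comp_seq (fun y => Rpower y (- m)) INR p_infty 0).
    apply is_lim_Rpower_neg; auto. exists 0%nat; intros; discriminate. apply is_lim_seq_INR.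
Qed.

Lemma F_ge_G r c d F x : 0 < r -> 0 < Kc r c d -> is_cdf_of (student_density r c d) F ->
  x < 0 -> Gf r c d x * (x ^ 2 / (1 + x ^ 2)) <= F x.
Proof.
  intros Hr HK HF Hx.
  assert (Hc : forall x, continuity_pt (student_density r c d) x) by (intros; apply sd_cont; auto).
  assert (H1 := improper_seq _ x (F x) Hc (HF x)).
  set (q := x ^ 2 / (1 + x ^ 2)).
  assert (Hq : 0 < q) by (unfold q; apply Rdiv_lt_0_compat; simpl; nra).
  assert (H2 : is_lim_seq (fun n => (Gf r c d x - Gf r c d (- INR n)) * q) ((Gf r c d x - 0) * q)).
  { apply is_lim_seq_scal_r with (a := q) (lu := Gf r c d x - 0).
    apply is_lim_seq_minus'. apply is_lim_seq_const. apply Gf_lim; auto. }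
  rewrite Rminus_0_r in H2.
  refine (is_lim_seq_le_loc _ _ _ _ _ H2 H1).
  destruct (nat_large (- x)) as [N HN]. exists N. intros n Hn. specialize (HN n Hn).
  set (a := - INR n). assert (Ha : a < x) by (unfold a; lra).
  assert (HI : RInt (fun t => student_density r c d t * (1 + / t ^ 2)) a x = Gf r c d x - Gf r c d a).
  { apply RInt_FTC. lra. intros; apply Gf_derive; lra. intros; apply Gf'_cont; lra. }
  rewrite <- HI.
  rewrite Rmult_comm, <- RInt_scal_R.
  2:{ apply exRInt_cont. lra. intros; apply Gf'_cont; lra. }
  apply RInt_le. lra.
  apply exRInt_cont. lra. intros; apply continuity_pt_mult. apply continuity_pt_const; intros ? ?; reflexivity.
  apply Gf'_cont; lra.
  apply exRInt_all; auto.
  intros t Ht.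
  pose proof (sd_pos r c d t HK).
  assert (Ht2 : x ^ 2 <= t ^ 2) by (simpl; nra).
  assert (q * (1 + / t ^ 2) <= 1).
  { unfold q. assert (0 < t ^ 2) by (simpl; nra). assert (0 < x ^ 2) by (simpl; nra).
    apply Rmult_le_reg_r with ((1 + x ^ 2) * t ^ 2). nra.
    replace (x ^ 2 / (1 + x ^ 2) * (1 + / t ^ 2) * ((1 + x ^ 2) * t ^ 2)) with (x ^ 2 * (t ^ 2 + 1)) by (field; lra).
    nra. }
  nra.
Qed.

Lemma convex_pow (F f df : R -> R) k : k < 0 -> (forall x, 0 < F x) ->
  (forall x, is_derive F x (f x)) -> (forall x, is_derive f x (df x)) ->
  (forall x, F x * df x <= (1 - k) * f x ^ 2) ->
  convex_on_R (fun x => Rpower (F x) k).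
Proof.
  intros Hk HF HdF Hdf Hineq.
  apply convex_of_deriv with (h' := fun x => k * exp (k * ln (F x)) * f x / F x).
  - intros x. unfold Rpower. auto_derive.
    + split; [eexists; apply HdF|split; auto].
    + replace (Derive (fun x0 => F x0) x) with (f x) by (symmetry; apply is_derive_unique; apply HdF).
      field. apply Rgt_not_eq, HF.
  - apply nondecr_of_deriv with (g' := fun x => k * exp (k * ln (F x)) / (F x) ^ 2 * ((k - 1) * f x ^ 2 + F x * df x)).
    + intros x. auto_derive.
      * repeat split; try (eexists; first [apply HdF | apply Hdf]); auto. apply Rgt_not_eq, HF.
      * replace (Derive (fun x0 => F x0) x) with (f x) by (symmetry; apply is_derive_unique; apply HdF).
        replace (Derive (fun x0 => f x0) x) with (df x) by (symmetry; apply is_derive_unique; apply Hdf).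
        field. apply Rgt_not_eq, HF.
    + intros x. specialize (Hineq x). pose proof (HF x).
      assert (0 < exp (k * ln (F x)) / F x ^ 2) by (apply Rdiv_lt_0_compat; [apply exp_pos|simpl; nra]).
      assert ((k - 1) * f x ^ 2 + F x * df x <= 0) by lra.
      replace (k * exp (k * ln (F x)) / F x ^ 2 * ((k - 1) * f x ^ 2 + F x * df x)) with
        ((- k) * (exp (k * ln (F x)) / F x ^ 2) * (- ((k - 1) * f x ^ 2 + F x * df x))) by (field; lra).
      apply Rmult_le_pos. apply Rmult_le_pos; lra. lra.
Qed.

Lemma convex_neg h : convex_on_R h -> convex_on_R (fun x => h (- x)).
Proof.
  intros H x y t H0 H1. replace (- (t * x + (1 - t) * y)) with (t * (- x) + (1 - t) * (- y)) by ring.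
  apply H; auto.
Qed.

Definition dsd r c d x := - (r + 1) * x * student_density r c d x / (r * (1 + x ^ 2 / r)).

Lemma Gf_dsd r c d x : 0 < r -> x < 0 ->
  Gf r c d x * dsd r c d x = (1 + 1 / r) * student_density r c d x ^ 2.
Proof.
  intros Hr Hx. unfold Gf, dsd. pose proof (phi_pos r x Hr).
  set (f := student_density r c d x). set (P := 1 + x ^ 2 / r). field. unfold P. lra.
Qed.

Lemma dsd_sign r c d x : 0 < r -> 0 < Kc r c d -> x <= 0 -> 0 <= dsd r c d x.
Proof.
  intros Hr HK Hx. unfold dsd. pose proof (phi_pos r x Hr). pose proof (sd_pos r c d x HK).
  unfold Rdiv. apply Rmult_le_pos. replace (- (r + 1) * x * student_density r c d x) with
    ((r + 1) * (- x) * student_density r c d x) by ring.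
  apply Rmult_le_pos; [apply Rmult_le_pos|]; lra.
  apply Rlt_le, Rinv_0_lt_compat. apply Rmult_lt_0_compat; lra.
Qed.

Lemma dsd_odd r c d x : dsd r c d (- x) = - dsd r c d x.
Proof.
  unfold dsd. rewrite sd_even. replace ((- x) ^ 2) with (x ^ 2) by ring.
  unfold Rdiv. ring.
Qed.


Lemma F_all r c d F : 0 < r -> is_Gamma ((r + 1) / 2) c -> is_Gamma (r / 2) d ->
  is_cdf_of (student_density r c d) F ->
  (forall x, F x + F (- x) = 1) /\ (forall x, 0 < F x) /\ (forall x, F x < 1) /\
  (forall x, is_derive F x (student_density r c d x)) /\
  (forall x, F x * dsd r c d x <= (1 + 1 / r) * student_density r c d x ^ 2).
Proof.
  intros Hr Hc Hd HF.
  assert (HK := Kc_pos r c d Hr Hc Hd).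
  assert (Hcont : forall x, continuity_pt (student_density r c d) x) by (intros; apply sd_cont; auto).
  assert (H0 := F0_half r c d F Hr Hc Hd HF).
  assert (Hdiff := cdf_diff _ F Hcont HF).
  assert (Hsym : forall x, F x + F (- x) = 1).
  { intros x. rewrite (Hdiff 0 x), (Hdiff 0 (- x)), RInt_odd; auto. lra. intros; apply sd_even. }
  assert (Hmono : forall x y, x <= y -> F x <= F y).
  { intros x y Hxy. rewrite (Hdiff x y). assert (0 <= RInt (student_density r c d) x y); [|lra].
    apply RInt_ge_0; auto. apply exRInt_all; auto. intros; apply Rlt_le, sd_pos; auto. }
  assert (Hneg : forall x, x < 0 -> 0 < F x).
  { intros x Hx. eapply Rlt_le_trans; [|apply (F_ge_G r c d F x); auto].
    apply Rmult_lt_0_compat. apply Gf_pos; auto. apply Rdiv_lt_0_compat; simpl; nra. }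
  assert (Hpos : forall x, 0 < F x).
  { intros x. destruct (Rlt_dec x 0) as [Hx|Hx]. auto.
    apply Rlt_le_trans with (F (-1)). apply Hneg; lra. apply Hmono; lra. }
  split; [auto|split; [auto|split; [|split]]].
  - intros x. specialize (Hsym x). specialize (Hpos (- x)). lra.
  - apply cdf_deriv; auto.
  - intros x. destruct (Rlt_dec x 0) as [Hx|Hx].
    + rewrite <- Gf_dsd by auto. apply Rmult_le_compat_r. apply dsd_sign; auto; lra.
      apply F_le_G; auto.
    + assert (dsd r c d x <= 0).
      { destruct (Req_dec x 0) as [->|Hx0].
        - unfold dsd. right. unfold Rdiv. ring.
        - rewrite <- (Ropp_involutive x), dsd_odd.
          assert (0 <= dsd r c d (- x)) by (apply dsd_sign; auto; lra). lra. }
      pose proof (Hpos x).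
      assert (F x * dsd r c d x <= 0).
      { replace (F x * dsd r c d x) with (- (F x * (- dsd r c d x))) by ring.
        assert (0 <= F x * (- dsd r c d x)) by (apply Rmult_le_pos; lra). lra. }
      assert (0 <= (1 + 1 / r) * student_density r c d x ^ 2).
      { apply Rmult_le_pos. assert (0 < 1 / r) by (apply Rdiv_lt_0_compat; lra). lra. apply pow2_ge_0. }
      lra.
Qed.

Lemma convex_ext h1 h2 : (forall x, h1 x = h2 x) -> convex_on_R h1 -> convex_on_R h2.
Proof. intros E H x y t H0 H1. rewrite <- !E. apply H; auto. Qed.

Lemma V_bound r c d F x : 0 < r -> 0 < Kc r c d ->
  (forall x, 0 < F x) -> (forall x, F x < 1) ->
  (forall x, F x * dsd r c d x <= (1 + 1 / r) * student_density r c d x ^ 2) ->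
  x <= 0 -> F x * (1 - F x) * Rabs (dsd r c d x) / student_density r c d x ^ 2 <= 1 + 1 / r.
Proof.
  intros Hr HK Hp Hl Hi Hx.
  rewrite Rabs_pos_eq by (apply dsd_sign; auto).
  pose proof (sd_pos r c d x HK). pose proof (Hp x). pose proof (Hl x). specialize (Hi x).
  assert (Hs : 0 < student_density r c d x ^ 2) by (simpl; nra).
  apply Rmult_le_reg_r with (student_density r c d x ^ 2); auto.
  unfold Rdiv. rewrite Rmult_assoc, Rinv_l, Rmult_1_r by lra.
  assert (0 <= dsd r c d x) by (apply dsd_sign; auto).
  assert (F x * (1 - F x) * dsd r c d x <= F x * dsd r c d x).
  { apply Rmult_le_compat_r; auto. nra. }
  lra.
Qed.

Lemma V_lower r c d F x : 0 < r -> 0 < Kc r c d -> is_cdf_of (student_density r c d) F ->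
  (forall x, 0 < F x) -> (forall x, F x < 1) -> x < 0 ->
  (1 + 1 / r) * (x ^ 2 / (1 + x ^ 2)) * (1 - Gf r c d x) <=
  F x * (1 - F x) * Rabs (dsd r c d x) / student_density r c d x ^ 2.
Proof.
  intros Hr HK HF Hp Hl Hx.
  rewrite Rabs_pos_eq by (apply dsd_sign; auto; lra).
  pose proof (sd_pos r c d x HK). pose proof (Hp x). pose proof (Hl x).
  pose proof (Gf_pos r c d x Hr HK Hx).
  assert (HG1 := F_le_G r c d F x Hr HK HF Hx).
  assert (HG2 := F_ge_G r c d F x Hr HK HF Hx).
  assert (E := Gf_dsd r c d x Hr Hx).
  set (G := Gf r c d x) in *. set (f := student_density r c d x) in *. set (q := x ^ 2 / (1 + x ^ 2)) in *.
  assert (Hq : 0 < q) by (unfold q; apply Rdiv_lt_0_compat; simpl; nra).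
  assert (Hr1 : 0 < 1 + 1 / r) by (assert (0 < 1 / r) by (apply Rdiv_lt_0_compat; lra); lra).
  assert (ED : dsd r c d x = (1 + 1 / r) * f ^ 2 / G) by (rewrite <- E; field; lra).
  rewrite ED.
  replace (F x * (1 - F x) * ((1 + 1 / r) * f ^ 2 / G) / f ^ 2) with ((1 + 1 / r) * ((F x / G) * (1 - F x))) by (field; split; lra).
  rewrite Rmult_assoc. apply Rmult_le_compat_l; [lra|].
  assert (q <= F x / G) by (apply Rmult_le_reg_r with G; auto; unfold Rdiv; rewrite Rmult_assoc, Rinv_l, Rmult_1_r by lra; lra).
  assert (0 <= F x / G) by lra.
  destruct (Rle_dec 0 (1 - G)) as [HG|HG].
  - apply Rmult_le_compat; lra.
  - assert (q * (1 - G) <= 0) by (apply Rmult_le_0_l; lra).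
    assert (0 <= F x / G * (1 - F x)) by (apply Rmult_le_pos; lra). lra.
Qed.

Lemma lim_q : is_lim_seq (fun n => INR (S n) ^ 2 / (1 + INR (S n) ^ 2)) 1.
Proof.
  apply is_lim_seq_ext with (u := fun n => 1 - / (1 + INR (S n) ^ 2)).
  { intros n. pose proof (pos_INR (S n)). field. nra. }
  replace (Finite 1) with (Finite (1 - 0)) by (f_equal; ring).
  apply is_lim_seq_minus'. apply is_lim_seq_const.
  apply is_lim_seq_le_le with (u := fun _ => 0) (w := fun n => / INR (S n)).
  - intros n. pose proof (lt_0_INR (S n) (Nat.lt_0_succ n)). assert (1 <= INR (S n)) by (rewrite S_INR; pose proof (pos_INR n); lra).
    split. apply Rlt_le, Rinv_0_lt_compat; nra.
    apply Rinv_le_contravar; auto. simpl; nra.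
  - apply is_lim_seq_const.
  - replace (Finite 0) with (Rbar_inv p_infty) by reflexivity.
    apply is_lim_seq_inv. apply (is_lim_seq_incr_1 INR). apply is_lim_seq_INR. discriminate.
Qed.

Theorem mainTheorem5 :
  forall (r c d : R) (F df : R -> R),
    0 < r ->
    is_Gamma ((r + 1) / 2) c ->
    is_Gamma (r / 2) d ->
    is_cdf_of (student_density r c d) F ->
    (forall x, derivable_pt_lim (student_density r c d) x (df x)) ->
    bi_s_concave (- 1 / (1 + r)) F /\
    (convex_on_R (fun x => Rpower (F x) (- 1 / r)) /\
     convex_on_R (fun x => Rpower (1 - F x) (- 1 / r))) /\
    is_lub (gamma_set F (student_density r c d) df) (1 + 1 / r).
Proof.
  intros r c d F df Hr Hc Hd HF Hdf.
  assert (HK := Kc_pos r c d Hr Hc Hd).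
  destruct (F_all r c d F Hr Hc Hd HF) as [Hsym [Hp [Hl [HdF Hi]]]].
  assert (Edf : forall x, df x = dsd r c d x).
  { intros x. apply (uniqueness_limite (student_density r c d) x). apply Hdf.
    apply is_derive_Reals. apply sd_derive; auto. }
  assert (C1 : convex_on_R (fun x => Rpower (F x) (- 1 / r))).
  { apply convex_pow with (f := student_density r c d) (df := dsd r c d); auto.
    assert (0 < / r) by (apply Rinv_0_lt_compat; auto). unfold Rdiv. lra.
    intros x. apply sd_derive; auto.
    intros x. replace (1 - -1 / r) with (1 + 1 / r) by (field; lra). apply Hi. }
  assert (C2 : convex_on_R (fun x => Rpower (1 - F x) (- 1 / r))).
  { apply convex_ext with (h1 := fun x => Rpower (F (- x)) (- 1 / r)).
    intros x. f_equal. specialize (Hsym x). lra.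
    apply (convex_neg (fun x => Rpower (F x) (- 1 / r))). exact C1. }
  split; [|split; [split; auto|]].
  - unfold bi_s_concave. cbv zeta.
    replace (-1 / (1 + r) / (1 + -1 / (1 + r))) with (- 1 / r) by (field; lra). split; auto.
  - set (V := fun x => F x * (1 - F x) * Rabs (df x) / student_density r c d x ^ 2).
    assert (Vb : forall x, V x <= 1 + 1 / r).
    { intros x. unfold V. rewrite Edf. destruct (Rle_dec x 0) as [Hx|Hx].
      - apply V_bound; auto.
      - rewrite <- (Ropp_involutive x). rewrite dsd_odd, Rabs_Ropp, sd_even.
        replace (F (- - x)) with (1 - F (- x)) by (specialize (Hsym (- x)); lra).
        replace ((1 - F (- x)) * (1 - (1 - F (- x)))) with (F (- x) * (1 - F (- x))) by ring.
        apply V_bound; auto; lra. }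
    split.
    + intros y [x ->]. apply Vb.
    + intros B HB. apply Rnot_lt_le. intros HBlt.
      set (w := fun n => (1 + 1 / r) * (INR (S n) ^ 2 / (1 + INR (S n) ^ 2)) * (1 - Gf r c d (- INR (S n)))).
      assert (Hw : is_lim_seq w ((1 + 1 / r) * 1 * (1 - 0))).
      { apply is_lim_seq_mult'. apply is_lim_seq_mult'. apply is_lim_seq_const. apply lim_q.
        apply is_lim_seq_minus'. apply is_lim_seq_const.
        apply (is_lim_seq_incr_1 (fun n => Gf r c d (- INR n))). apply Gf_lim; auto. }
      replace ((1 + 1 / r) * 1 * (1 - 0)) with (1 + 1 / r) in Hw by (field; lra).
      apply is_lim_seq_spec in Hw.
      assert (He : 0 < 1 + 1 / r - B) by lra.
      destruct (Hw (mkposreal _ He)) as [N HN]. specialize (HN N (le_n N)). simpl in HN.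
      apply Rabs_def2 in HN. destruct HN as [HN1 HN2].
      assert (Hx : - INR (S N) < 0) by (pose proof (lt_0_INR (S N) (Nat.lt_0_succ N)); lra).
      assert (HV := V_lower r c d F (- INR (S N)) Hr HK HF Hp Hl Hx).
      replace ((- INR (S N)) ^ 2) with (INR (S N) ^ 2) in HV by ring.
      assert (HVB : V (- INR (S N)) <= B) by (apply HB; exists (- INR (S N)); reflexivity).
      unfold V in HVB. rewrite Edf in HVB. unfold w in HN2. lra.
Qed.
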